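(* Let $G$ be a hypo-unique domination graph of order $n$. Then $1\leq \gamma(G)\leq \lfloor 2n/5\rfloor+1$. Furthermore: (i) $\gamma(G)=1$ if and only if $G=K_2$; (ii) $\gamma(G)=2$ if and only if $n\geq 4$ is even and $G$ is the complete graph $K_n$ minus a perfect matching; (iii) $\gamma(G)=\lfloor 2n/5\rfloor+1$ if and only if $G\in\{K_2,C_4,C_7\}$.
   Context: All graphs are finite, simple and undirected. A set $D\subseteq V(G)$ is dominating if every vertex of $G$ not in $D$ has a neighbor in $D$; $\gamma(G)$ is the minimum size of a dominating set, and a dominating set of size $\gamma(G)$ is a $\gamma$-set. $G$ is a hypo-unique domination graph if $G$ has at least two $\gamma$-sets but for every $v\in V(G)$ the graph $G-v$ has exactly one $\gamma$-set. $C_m$ denotes the cycle on $m$ vertices. *)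

(* Defs.v *)
(* A simple graph is a finType T with a symmetric,
   irreflexive boolean adjacency relation e. *)
From mathcomp Require Import all_boot.
Set Implicit Arguments. Unset Strict Implicit. Unset Printing Implicit Defensive.

Section Dom.
Variables (T : finType) (e : rel T).

Definition dominating (S D : {set T}) : bool :=
  (D \subset S) &&
  [forall x in S, (x \in D) || [exists y in D, e x y]].

(* domination number of G[S]: the minimum size of a dominating set
   (S itself is always dominating, so the arg min is well defined). *)
Definition gamma (S : {set T}) : nat :=
  #|[arg min_(D < S | dominating S D) #|D|]|.

Definition gamma_set (S D : {set T}) : bool :=
  dominating S D && (#|D| == gamma S).

Definition hypo_unique : Prop :=
  1 < #|[set D | gamma_set setT D]| /\
  forall v : T, #|[set D | gamma_set (setT :\ v) D]| = 1.
End Dom.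

Definition isomorphic (T : finType) (e : rel T) (m : nat) (e' : rel 'I_m) : Prop :=
  exists f : T -> 'I_m, bijective f /\ forall x y, e x y = e' (f x) (f y).

Definition complete_rel (m : nat) : rel 'I_m := fun x y => x != y.

Definition cycle_rel (m : nat) : rel 'I_m :=
  fun x y => (y == x.+1 %% m :> nat) || (x == y.+1 %% m :> nat).

(* K_m minus the perfect matching {2k, 2k+1} (m even) *)
Definition cocktail_rel (m : nat) : rel 'I_m :=
  fun x y => (x != y) && (x./2 != y./2).
Arguments isomorphic {T} e m e'.
Arguments complete_rel m : clear implicits.
Arguments cycle_rel m : clear implicits.
Arguments cocktail_rel m : clear implicits.

(* Main.v *)
Require Import Defs.
From mathcomp Require Import all_boot zify.
Set Implicit Arguments. Unset Strict Implicit. Unset Printing Implicit Defensive.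

Section Basics.
Variables (T : finType) (e : rel T).
Hypotheses (e_sym : symmetric e) (e_irr : irreflexive e).

Lemma domP (S D : {set T}) : reflect (D \subset S /\ forall x, x \in S -> x \in D \/ exists2 y, y \in D & e x y)
  (dominating e S D).
Proof.
apply: (iffP andP) => [[sDS /forall_inP H]|[sDS H]]; split => //.
  move=> x /H /orP [->|/exists_inP [y yD exy]]; [by left| by right; exists y].
apply/forall_inP => x /H [->//|[y yD exy]]; apply/orP; right; apply/exists_inP; by exists y.
Qed.

Lemma dom_self (S : {set T}) : dominating e S S.
Proof. by apply/domP; split => // x ->; left. Qed.

Lemma gamma_ex (S : {set T}) : exists2 D, dominating e S D & #|D| = gamma e S.
Proof.
rewrite /gamma; case: arg_minnP; first exact: dom_self.
by move=> D HD _; exists D.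
Qed.

Lemma gamma_min (S D : {set T}) : dominating e S D -> gamma e S <= #|D|.
Proof.
rewrite /gamma; case: arg_minnP; first exact: dom_self.
by move=> D0 _ H /H.
Qed.

Lemma dom_sub (S D : {set T}) : dominating e S D -> D \subset S.
Proof. by case/andP. Qed.

Lemma gamma_le (S : {set T}) : gamma e S <= #|S|.
Proof. exact/gamma_min/dom_self. Qed.

Lemma gamma_setP (S D : {set T}) : gamma_set e S D = dominating e S D && (#|D| == gamma e S).
Proof. by []. Qed.

Lemma dom_del (S D : {set T}) w : dominating e S D -> w \notin D -> dominating e (S :\ w) D.
Proof.
move=> /domP [sDS H] wD; apply/domP; split.
  apply/subsetP => x xD; rewrite !inE (subsetP sDS) // andbT.
  by apply: contraNneq wD => <-.
by move=> x /setD1P [_ /H].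
Qed.

Lemma dom_add (S D : {set T}) w : w \in S -> dominating e (S :\ w) D -> dominating e S (w |: D).
Proof.
move=> wS /domP [sDS H]; apply/domP; split.
  apply/subsetP => x; rewrite !inE => /orP [/eqP->//|/(subsetP sDS)]; by case/setD1P.
move=> x xS; have [->|xw] := eqVneq x w; first by left; rewrite !inE eqxx.
have xSw : x \in S :\ w by rewrite !inE xw xS.
have [xD|[y yD exy]] := H x xSw.
  by left; rewrite !inE xD orbT.
by right; exists y => //; rewrite !inE yD orbT.
Qed.

Lemma gamma_del (S : {set T}) (w : T) : w \in S -> gamma e S <= (gamma e (S :\ w)).+1.
Proof.
move=> wS; have [D HD <-] := gamma_ex (S :\ w).
apply: leq_trans (gamma_min (dom_add wS HD)) _.
by rewrite cardsU1; case: (w \in D).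
Qed.

Lemma gamma0 (S : {set T}) : gamma e S = 0 -> S = set0.
Proof.
have [D HD] := gamma_ex S => <- /eqP; rewrite cards_eq0 => /eqP D0.
move: HD; rewrite D0 => /domP [_ H]; apply/setP => x; rewrite inE.
apply/negP => /H [|[y]]; by rewrite inE.
Qed.

End Basics.

Section Hypo.
Variables (T : finType) (e : rel T).
Hypotheses (e_sym : symmetric e) (e_irr : irreflexive e) (hyp : hypo_unique e).

Lemma dom_gs (S D : {set T}) : dominating e S D -> #|D| <= gamma e S -> gamma_set e S D.
Proof.
move=> HD HS; rewrite gamma_setP HD eqn_leq HS /=; exact: gamma_min.
Qed.

Lemma gs_uniq (w : T) (D1 D2 : {set T}) :
  gamma_set e (setT :\ w) D1 -> gamma_set e (setT :\ w) D2 -> D1 = D2.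
Proof.
move=> H1 H2; case: hyp => _ /(_ w) /eqP /cards1P [D0 HD0].
have: D1 \in [set D | gamma_set e (setT :\ w) D] by rewrite inE.
have: D2 \in [set D | gamma_set e (setT :\ w) D] by rewrite inE.
by rewrite HD0 !inE => /eqP -> /eqP ->.
Qed.

Lemma two_gs : exists D1 D2 : {set T},
  [/\ gamma_set e setT D1, gamma_set e setT D2 & D1 != D2].
Proof.
case: hyp => /card_gt1P [D1 [D2 [H1 H2 H12]]] _; exists D1, D2.
by move: H1 H2; rewrite !inE => H1 H2.
Qed.

Lemma gsw_ex (w : T) : exists2 D, gamma_set e (setT :\ w) D &
  forall D', gamma_set e (setT :\ w) D' -> D' = D.
Proof.
have [D HD HDc] := gamma_ex e (setT :\ w).
have gD : gamma_set e (setT :\ w) D by rewrite gamma_setP HD HDc eqxx.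
exists D; first done. by move=> D' HD'; exact: (gs_uniq HD' gD).
Qed.

Lemma gs_dom (S D : {set T}) : gamma_set e S D -> dominating e S D.
Proof. by case/andP. Qed.

Lemma gs_card (S D : {set T}) : gamma_set e S D -> #|D| = gamma e S.
Proof. by case/andP => _ /eqP. Qed.

Lemma no_isolated (x : T) : exists y, e x y.
Proof.
case: (boolP [exists y, e x y]) => [/existsP //|/existsPn iso]; exfalso.
have [D1 [D2 [g1 g2 n12]]] := two_gs.
have inD (D : {set T}) : gamma_set e setT D -> x \in D.
  move=> /gs_dom /domP [_ /(_ x (in_setT x))] [//|[y _]]; by rewrite (negbTE (iso y)).
have gsub (D : {set T}) : gamma_set e setT D -> gamma_set e (setT :\ x) (D :\ x).
  move=> gD; have xD := inD D gD; apply: dom_gs.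
    apply/domP; split; first by apply: setSD; rewrite subsetT.
    move=> y /setD1P [yx _].
    have /domP [_ /(_ y (in_setT y))] := gs_dom gD.
    case=> [yD|[z zD eyz]]; first by left; rewrite !inE yx.
    right; exists z => //; rewrite !inE zD andbT.
    by apply: contraNneq (iso y) => zx; rewrite -zx e_sym.
  have := gamma_del e (in_setT x); rewrite -(gs_card gD) (cardsD1 x D) xD.
  by rewrite add1n ltnS.
have := gs_uniq (gsub _ g1) (gsub _ g2) => H.
move/negP: n12; apply; apply/eqP.
by rewrite -(setD1K (inD _ g1)) -(setD1K (inD _ g2)) H.
Qed.

End Hypo.

Section Cases.
Variables (T : finType) (e : rel T).
Hypotheses (e_sym : symmetric e) (e_irr : irreflexive e) (hyp : hypo_unique e).

Lemma caseA_two (w : T) (D1 D2 : {set T}) : gamma_set e setT D1 -> gamma_set e setT D2 ->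
  D1 != D2 -> w \notin D1 -> w \notin D2 -> gamma e (setT :\ w) < gamma e setT.
Proof.
move=> g1 g2 n12 w1 w2; rewrite ltnNge; apply/negP => le.
have h (D : {set T}) : gamma_set e setT D -> w \notin D -> gamma_set e (setT :\ w) D.
  move=> gD wD; apply: dom_gs; first exact: dom_del (gs_dom gD) wD.
  by rewrite (gs_card gD).
by move/negP: n12; apply; apply/eqP; apply: (gs_uniq hyp (h _ g1 w1) (h _ g2 w2)).
Qed.

Lemma caseB (w : T) (D : {set T}) : gamma e setT <= gamma e (setT :\ w) ->
  gamma_set e setT D -> w \notin D -> gamma_set e (setT :\ w) D.
Proof.
move=> le gD wD; apply: dom_gs; first exact: dom_del (gs_dom gD) wD.
by rewrite (gs_card gD).
Qed.

Lemma caseA_struct (w : T) (D : {set T}) : gamma e (setT :\ w) < gamma e setT ->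
  gamma_set e (setT :\ w) D ->
  [/\ (gamma e (setT :\ w)).+1 = gamma e setT, w \notin D,
      (forall y, y \in D -> ~~ e w y) &
      forall u, (u == w) || e w u -> gamma_set e setT (u |: D)].
Proof.
move=> lt gD.
have eqg : (gamma e (setT :\ w)).+1 = gamma e setT.
  by apply/eqP; rewrite eqn_leq lt gamma_del.
have wD : w \notin D.
  by apply/negP => /(subsetP (dom_sub (gs_dom gD))); rewrite !inE eqxx.
have nbr : forall y, y \in D -> ~~ e w y.
  move=> y yD; apply/negP => ewy.
  have dD : dominating e setT D.
    have /domP [sD H] := gs_dom gD; apply/domP; split; first exact: subsetT.
    move=> x _; have [->|xw] := eqVneq x w; first by right; exists y.
    by apply: H; rewrite !inE xw.
  by have := gamma_min dD; rewrite (gs_card gD) leqNgt lt.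
split=> // u /orP [/eqP->|ewu].
  apply: dom_gs; first exact: dom_add (in_setT w) (gs_dom gD).
  by rewrite cardsU1 wD (gs_card gD) -eqg.
have uD : u \notin D by apply/negP => uD; move: (nbr u uD); rewrite ewu.
apply: dom_gs; last by rewrite cardsU1 uD (gs_card gD) -eqg.
have /domP [sD H] := gs_dom gD; apply/domP; split; first exact: subsetT.
move=> x _; have [->|xw] := eqVneq x w.
  by right; exists u; rewrite ?inE ?eqxx.
have xSw : x \in setT :\ w by rewrite !inE xw.
have [xD|[y yD exy]] := H x xSw.
  by left; rewrite !inE xD orbT.
by right; exists y => //; rewrite !inE yD orbT.
Qed.

Definition priv (S D : {set T}) (x p : T) :=
  [&& p \in S, p \notin D, e x p & [forall z in D, e z p ==> (z == x)]].

Lemma pnl_aux (S D : {set T}) (x y : T) : gamma_set e S D ->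
  (forall D', gamma_set e S D' -> D' = D) -> x \in D -> y \in S -> e x y ->
  [set p | priv S D x p] \subset [set y] -> False.
Proof.
move=> gD uD xD yS exy sub.
have xy : x != y by apply: contraTneq exy => ->; rewrite e_irr.
have /domP [sDS H] := gs_dom gD.
pose D' := y |: (D :\ x).
have dD' : dominating e S D'.
  rewrite /D'.
  apply/domP; split.
    by rewrite subUset sub1set yS (subset_trans (subsetDl _ _) sDS).
  move=> s sS; have [->|sy] := eqVneq s y; first by left; rewrite !inE eqxx.
  have [->|sx] := eqVneq s x; first by right; exists y; rewrite ?inE ?eqxx.
  case: (boolP (s \in D)) => [sD|sD]; first by left; rewrite !inE sD sx orbT.
  have [z zD esz] : exists2 z, z \in D & e s z by case: (H s sS); rewrite ?(negbTE sD).
  case: (boolP [exists z0 in D :\ x, e s z0]) => [/exists_inP [z0 z0D esz0]|/exists_inPn hn].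
    by right; exists z0 => //; rewrite in_setU1 z0D orbT.
  have ps : priv S D x s.
    rewrite /priv sS sD /=.
    have zx : z = x.
      apply/eqP/negPn/negP => zx; move: (hn z); rewrite !inE zx zD esz.
      by move/(_ isT).
    rewrite -zx e_sym esz /=; apply/forall_inP => z1 z1D; apply/implyP => ez1.
    apply/negPn/negP => z1x; move: (hn z1); rewrite !inE -zx z1x z1D e_sym ez1.
    by move/(_ isT).
  have : s \in [set p | priv S D x p] by rewrite inE.
  by move/(subsetP sub); rewrite inE (negbTE sy).
have cD' : #|D'| <= #|D|.
  by rewrite cardsU1 (cardsD1 x D) xD; case: (y \notin D :\ x).
have := uD D' (dom_gs dD' (leq_trans cD' (eq_leq (gs_card gD)))).
move/setP/(_ x); rewrite /D' !inE eqxx xD /= (negbTE xy).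
by [].
Qed.

Lemma pnl (S D : {set T}) (x y : T) : gamma_set e S D ->
  (forall D', gamma_set e S D' -> D' = D) -> x \in D -> y \in S -> e x y ->
  1 < #|[set p | priv S D x p]|.
Proof.
move=> gD uD xD yS exy; rewrite ltnNge; apply/negP => le1.
case: (set_0Vmem [set p | priv S D x p]) => [P0|[p pP]].
  by apply: (pnl_aux gD uD xD yS exy); rewrite P0 sub0set.
have pp := pP; rewrite inE in pp; case/and4P: pp => pS _ exp _.
apply: (pnl_aux gD uD xD pS exp); apply/subsetP => q qP; rewrite inE.
by move/card_le1_eqP: le1 => /(_ q p qP pP) ->.
Qed.

Lemma priv_uniq (S D : {set T}) (x x' p : T) : priv S D x p -> priv S D x' p ->
  x' \in D -> x = x'.
Proof.
case/and4P => _ _ _ /forall_inP H /and4P [_ _ ex' _] x'D.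
by apply/esym/eqP; move: (H x' x'D); rewrite ex'.
Qed.

Lemma pnc (S D : {set T}) : gamma_set e S D -> (forall D', gamma_set e S D' -> D' = D) ->
  2 * #|[set x in D | [exists y in S, e x y]]| <= #|S :\: D|.
Proof.
move=> gD uD.
set X := [set x in D | _].
pose p1 x := odflt x [pick p | priv S D x p].
pose p2 x := odflt x [pick p | priv S D x p && (p != p1 x)].
have hp x : x \in X -> [/\ x \in D, priv S D x (p1 x), priv S D x (p2 x) & p2 x != p1 x].
  rewrite inE => /andP [xD /exists_inP [y yS exy]].
  have /card_gt1P [q1 [q2 [q1P q2P q12]]] := pnl gD uD xD yS exy.
  rewrite inE in q1P; rewrite inE in q2P.
  have pp1 : priv S D x (p1 x).
    rewrite /p1; case: pickP => [p //|none]; by move: (none q1); rewrite q1P.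
  have [q qP qn] : exists2 q, priv S D x q & q != p1 x.
    have [q1e|q1n] := eqVneq q1 (p1 x); last by exists q1.
    by exists q2 => //; rewrite -q1e eq_sym.
  have pp2 : priv S D x (p2 x) && (p2 x != p1 x).
    rewrite /p2; case: pickP => [p //|none]; by move: (none q); rewrite qP qn.
  by case/andP: pp2.
have inj1 : {in X &, injective p1}.
  move=> x x' xX x'X eq; have [_ h1 _ _] := hp x xX; have [x'D h1' _ _] := hp x' x'X.
  by apply: (priv_uniq h1 _ x'D); rewrite eq.
have inj2 : {in X &, injective p2}.
  move=> x x' xX x'X eq; have [_ _ h1 _] := hp x xX; have [x'D _ h1' _] := hp x' x'X.
  by apply: (priv_uniq h1 _ x'D); rewrite eq.
have disj : p1 @: X :&: p2 @: X = set0.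
  apply/setP => q; rewrite !inE; apply/negP => /andP [/imsetP [x xX ->] /imsetP [x' x'X eq]].
  have [xD h1 h2 n12] := hp x xX; have [x'D _ h2' _] := hp x' x'X.
  have xx' : x = x' by apply: (priv_uniq h1 _ x'D); rewrite eq.
  by move: n12; rewrite xx' -eq xx' eqxx.
have sub : p1 @: X :|: p2 @: X \subset S :\: D.
  apply/subsetP => q; rewrite !inE => /orP [] /imsetP [x xX ->].
    by have [_ /and4P [-> -> _ _] _ _] := hp x xX.
  by have [_ _ /and4P [-> -> _ _] _] := hp x xX.
have := subset_leq_card sub; rewrite cardsU disj cards0 subn0.
by rewrite (card_in_imset inj1) (card_in_imset inj2) mul2n addnn.
Qed.

End Cases.

Section Bound.
Variables (T : finType) (e : rel T).
Hypotheses (e_sym : symmetric e) (e_irr : irreflexive e) (hyp : hypo_unique e).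

Lemma cardT1 (w : T) : #|setT :\ w| = #|T|.-1.
Proof. by rewrite -cardsT (cardsD1 w setT) in_setT. Qed.

Lemma caseA_bound (w : T) : gamma e (setT :\ w) < gamma e setT ->
  3 * gamma e (setT :\ w) <= #|T|.-1.
Proof.
move=> lt; have [D gD uD] := gsw_ex hyp w.
have [eqg wD nbr _] := caseA_struct lt gD.
have := pnc e_sym e_irr gD uD.
have -> : [set x in D | [exists y in setT :\ w, e x y]] = D.
  apply/setP => x; rewrite inE; case xD: (x \in D) => //=.
  have [y exy] := no_isolated e_sym hyp x.
  apply/exists_inP; exists y => //; rewrite !inE andbT.
  apply: contraTneq exy => ->; rewrite e_sym; exact: nbr.
rewrite cardsDS ?(dom_sub (gs_dom gD)) // cardT1 (gs_card gD).
move=> h; have := leq_sub2r (gamma e (setT :\ w)) h.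
lia.
Qed.

Lemma half (D1 D2 : {set T}) (v : T) :
  (forall w, gamma e setT <= gamma e (setT :\ w)) ->
  gamma_set e setT D1 -> gamma_set e setT D2 -> (forall t, t \in D1 :|: D2) ->
  v \in D1 -> v \notin D2 ->
  2 * #|[set x in D2 | [exists y in setT :\ v, e x y]]| + 1 <= #|D1 :\: D2|.
Proof.
move=> allB g1 g2 cov vD1 vD2.
have g2v := caseB (allB v) g2 vD2.
have := pnc e_sym e_irr g2v (fun D' gD' => gs_uniq hyp gD' g2v).
have sub : (setT :\ v) :\: D2 \subset (D1 :\: D2) :\ v.
  apply/subsetP => t; rewrite !inE andbT => /andP [tD2 tv]; rewrite tD2 tv /=.
  by move: (cov t); rewrite !inE (negbTE tD2) orbF.
have := subset_leq_card sub.
have := cardsD1 v (D1 :\: D2); rewrite !inE vD2 vD1 /= => ->.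
lia.
Qed.

Lemma exA : 2 < #|T| -> exists w, gamma e (setT :\ w) < gamma e setT.
Proof.
move=> n3; case: (boolP [exists w, gamma e (setT :\ w) < gamma e setT]).
  by move/existsP.
move/existsPn => hB; exfalso.
have allB : forall w, gamma e setT <= gamma e (setT :\ w).
  by move=> w; rewrite leqNgt hB.
have [D1 [D2 [g1 g2 n12]]] := two_gs hyp.
have cov : forall t, t \in D1 :|: D2.
  move=> t; rewrite inE; apply/negPn/negP; rewrite negb_or => /andP [t1 t2].
  have := gs_uniq hyp (caseB (allB t) g1 t1) (caseB (allB t) g2 t2).
  by move/eqP; rewrite (negbTE n12).
have cov' : forall t, t \in D2 :|: D1 by move=> t; rewrite setUC.
have c12 : #|D1| = #|D2| by rewrite (gs_card g1) (gs_card g2).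
have cA : #|D1 :\: D2| = #|D2 :\: D1| by rewrite !cardsD setIC c12.
have [v vA] : exists v, v \in D1 :\: D2.
  apply/card_gt0P; rewrite lt0n cards_eq0 setD_eq0; apply/negP => sub.
  by move: n12; rewrite eqEcard sub c12 leqnn.
have [b bB] : exists b, b \in D2 :\: D1.
  by apply/card_gt0P; rewrite -cA; apply/card_gt0P; exists v.
move: (vA) (bB); rewrite !inE => /andP [vD2 vD1] /andP [bD1 bD2].
have hv := half allB g1 g2 cov vD1 vD2.
have hb := half allB g2 g1 cov' bD2 bD1.
have aD2 : #|D1 :\: D2| <= #|D2| by rewrite -c12 subset_leq_card // subsetDl.
case: (ltnP 1 #|D1 :\: D2|) => [a2|a1].
  have [v' v'A] : exists v', v' \in (D1 :\: D2) :\ v.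
    apply/card_gt0P; move: a2; rewrite (cardsD1 v) vA; lia.
  move: v'A; rewrite !inE => /andP [v'v /andP [v'D2 v'D1]].
  have hv' := half allB g1 g2 cov v'D1 v'D2.
  set Xv := [set x in D2 | _] in hv.
  set Xv' := [set x in D2 | _] in hv'.
  have : D2 \subset Xv :|: Xv'.
    apply/subsetP => x xD2; have [y exy] := no_isolated e_sym hyp x.
    rewrite !inE xD2 /=; case: (eqVneq y v) => [yv|yv].
      apply/orP; right; apply/exists_inP; exists y => //.
      by rewrite !inE yv eq_sym v'v.
    by apply/orP; left; apply/exists_inP; exists y => //; rewrite !inE yv.
  move/subset_leq_card; have := leq_card_setU Xv Xv'; case => le _ le2.
  move: hv hv' aD2 le le2; lia.
set Xv := [set x in D2 | _] in hv.
set Xb := [set x in D1 | _] in hb.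
have Xv0 : forall x, x \in Xv = false.
  move=> x; apply/negP => xX; have : 0 < #|Xv| by apply/card_gt0P; exists x.
  move: hv a1; lia.
have Xb0 : forall x, x \in Xb = false.
  move=> x; apply/negP => xX; have : 0 < #|Xb| by apply/card_gt0P; exists x.
  move: hb a1; rewrite cA; lia.
have [t tvb] : exists t, t \notin [set v; b].
  suff : 0 < #|~: [set v; b]| by case/card_gt0P => t; rewrite inE => ?; exists t.
  have := cardsC [set v; b]; rewrite cards2.
  move: n3; case: (v != b) => /=; lia.
move: tvb; rewrite !inE negb_or => /andP [tv tb].
have [y ety] := no_isolated e_sym hyp t.
move: (cov t); rewrite inE => /orP [tD1|tD2].
  have yb : y = b.
    apply/eqP/negPn/negP => yb; move: (Xb0 t); rewrite /Xb !inE tD1 /=.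
    by move/negbT/negP; apply; apply/exists_inP; exists y; rewrite // !inE yb.
  move: (Xv0 b); rewrite /Xv !inE bD2 /=; move/negbT/negP; apply.
  apply/exists_inP; exists t; rewrite ?inE ?tv // e_sym -yb //.
have yv : y = v.
  apply/eqP/negPn/negP => yv; move: (Xv0 t); rewrite /Xv !inE tD2 /=.
  by move/negbT/negP; apply; apply/exists_inP; exists y; rewrite // !inE yv.
move: (Xb0 v); rewrite /Xb !inE vD1 /=; move/negbT/negP; apply.
apply/exists_inP; exists t; rewrite ?inE ?tb // e_sym -yv //.
Qed.

End Bound.

Section Small.
Variables (T : finType) (e : rel T).
Hypotheses (e_sym : symmetric e) (e_irr : irreflexive e) (hyp : hypo_unique e).

Lemma gamma_pos : 0 < gamma e setT.
Proof.
rewrite lt0n; apply/negP => /eqP /(gamma0 (e:=e)) T0.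
have [D1 [D2 [g1 g2 n12]]] := two_gs hyp.
have h (D : {set T}) : D = set0.
  by apply/setP => x; move: (in_setT x); rewrite T0 inE.
by move: n12; rewrite (h D1) (h D2) eqxx.
Qed.

Lemma card_ge2 : 1 < #|T|.
Proof.
have : 0 < #|T|.
  have := gamma_le e setT; rewrite cardsT; have := gamma_pos; lia.
case/card_gt0P => x _; have [y exy] := no_isolated e_sym hyp x.
apply/card_gt1P; exists x, y; split => //.
by apply: contraTneq exy => ->; rewrite e_irr.
Qed.

Lemma two_elems (x y : T) : #|T| = 2 -> x != y -> forall t, (t == x) || (t == y).
Proof.
move=> n2 xy t.
have sT : [set x; y] = setT by apply/eqP; rewrite eqEcard subsetT cardsT cards2 xy n2.
by move: (in_setT t); rewrite -sT !inE.
Qed.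

Lemma n2_K2 : #|T| = 2 -> gamma e setT = 1 /\ isomorphic e 2 (complete_rel 2).
Proof.
move=> n2.
have /card_gt0P [x _] : 0 < #|T| by rewrite n2.
have [y exy] := no_isolated e_sym hyp x.
have xy : x != y by apply: contraTneq exy => ->; rewrite e_irr.
have all2 := two_elems n2 xy.
split.
  apply/eqP; rewrite eqn_leq gamma_pos andbT.
  apply: (leq_trans (gamma_min (D := [set x]) _)); last by rewrite cards1.
  apply/domP; split; first exact: subsetT.
  move=> t _; case/orP: (all2 t) => /eqP ->; first by left; rewrite inE.
  by right; exists x; rewrite ?inE // e_sym.
pose f t : 'I_2 := if t == x then ord0 else ord_max.
have fx : f x = ord0 by rewrite /f eqxx.
have fy : f y = ord_max by rewrite /f eq_sym (negbTE xy).
exists f; split.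
  apply: inj_card_bij; last by rewrite card_ord n2.
  move=> t1 t2; case/orP: (all2 t1) => /eqP ->; case/orP: (all2 t2) => /eqP -> //;
    by rewrite fx fy.
move=> t1 t2; rewrite /complete_rel.
by case/orP: (all2 t1) => /eqP ->; case/orP: (all2 t2) => /eqP ->;
  rewrite ?fx ?fy ?e_irr ?exy ?(e_sym y x) ?exy.
Qed.

Lemma gamma1_n2 : gamma e setT = 1 -> #|T| = 2.
Proof.
move=> g1; have := card_ge2; case: (ltnP 2 #|T|) => [n3 _|]; last lia.
exfalso.
have [D1 [D2 [h1 h2 n12]]] := two_gs hyp.
have /cards1P [u Du] : #|D1| == 1 by rewrite (gs_card h1) g1.
have /cards1P [u' Du'] : #|D2| == 1 by rewrite (gs_card h2) g1.
have [w wuu] : exists w, w \notin [set u; u'].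
  suff : 0 < #|~: [set u; u']| by case/card_gt0P => t; rewrite inE => ?; exists t.
  have := cardsC [set u; u']; rewrite cards2.
  move: n3; case: (u != u') => /=; lia.
move: wuu; rewrite !inE negb_or => /andP [wu wu'].
have := caseA_two hyp (w:=w) h1 h2 n12; rewrite Du Du' !inE wu wu' g1 => /(_ isT isT).
rewrite ltnS leqn0 => /eqP /(gamma0 (e:=e)) /setP /(_ u).
rewrite !inE; case: eqVneq => // uw _.
by move: wu; rewrite uw eqxx.
Qed.

Lemma main_bound : 2 < #|T| -> 3 * (gamma e setT).-1 <= #|T|.-1.
Proof.
move=> n3; have [w lt] := exA e_sym e_irr hyp n3.
have [D gD _] := gsw_ex hyp w.
have [eqg _ _ _] := caseA_struct lt gD.
by rewrite -eqg /=; apply: caseA_bound.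
Qed.

Lemma bound_all : 1 <= gamma e setT <= (2 * #|T|) %/ 5 + 1.
Proof.
rewrite gamma_pos /=.
case: (ltnP 2 #|T|) => [n3|n2].
  have := main_bound n3; have := gamma_pos.
  have := divn_eq (2 * #|T|) 5; have := ltn_pmod (2 * #|T|) (isT : 0 < 5).
  move: ((2 * #|T|) %/ 5) ((2 * #|T|) %% 5) => q r; lia.
have n2' : #|T| = 2 by have := card_ge2; lia.
by rewrite (n2_K2 n2').1 n2'.
Qed.

End Small.

Section Transport.
Variables (T T' : finType) (e : rel T) (e' : rel T') (f : T -> T') (g : T' -> T).
Hypotheses (fK : cancel f g) (gK : cancel g f) (hf : forall x y, e x y = e' (f x) (f y)).

Lemma fS (S : {set T}) : f @: S = g @^-1: S.
Proof. exact: can2_imset_pre. Qed.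

Lemma dom_iso (S D : {set T}) : dominating e S D = dominating e' (f @: S) (f @: D).
Proof.
rewrite !fS; apply/idP/idP => /domP [sub H]; apply/domP; split.
- by apply/subsetP => y; rewrite !inE => /(subsetP sub).
- move=> y; rewrite inE => /H [gD|[z zD ez]]; first by left; rewrite inE.
  by right; exists (f z); [rewrite inE fK | rewrite -[y]gK -hf].
- apply/subsetP => x xD; have := subsetP sub (f x); rewrite !inE fK; exact.
- move=> x xS; have := H (f x); rewrite !inE fK => /(_ xS) [xD|[z zD ez]].
    by left.
  by right; exists (g z); [move: zD; rewrite inE | rewrite hf gK].
Qed.

Lemma fgK (A : {set T'}) : f @: (g @: A) = A.
Proof.
rewrite -imset_comp (eq_imset _ (gK : f \o g =1 id)); exact: imset_id.
Qed.

Lemma finj : injective f. Proof. exact: can_inj fK. Qed.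

Lemma gamma_iso (S : {set T}) : gamma e S = gamma e' (f @: S).
Proof.
apply/eqP; rewrite eqn_leq; apply/andP; split.
  have [D' HD' <-] := gamma_ex e' (f @: S).
  rewrite -(fgK D') -dom_iso in HD'.
  apply: leq_trans (gamma_min HD') _.
  exact: leq_imset_card.
have [D HD <-] := gamma_ex e S.
rewrite dom_iso in HD; apply: leq_trans (gamma_min HD) _.
by rewrite card_imset //; exact: finj.
Qed.

Lemma gs_iso (S D : {set T}) : gamma_set e S D = gamma_set e' (f @: S) (f @: D).
Proof.
by rewrite !gamma_setP dom_iso gamma_iso card_imset //; exact: finj.
Qed.

Lemma card_gs_iso (S : {set T}) :
  #|[set D | gamma_set e S D]| = #|[set D | gamma_set e' (f @: S) D]|.
Proof.
rewrite -(card_imset _ (imset_inj finj)); apply: eq_card => D'.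
rewrite [in RHS]inE; apply/imsetP/idP => [[D]|HD'].
  by rewrite inE => gD ->; rewrite -gs_iso.
by exists (g @: D'); rewrite ?fgK // inE gs_iso fgK.
Qed.

Lemma fT : f @: setT = setT.
Proof. by rewrite fS; apply/setP => y; rewrite !inE. Qed.

Lemma fTD (w : T) : f @: (setT :\ w) = setT :\ f w.
Proof. by rewrite fS; apply/setP => y; rewrite !inE -{1}(fK w) (can_eq gK). Qed.

Lemma hypo_iso : hypo_unique e -> hypo_unique e'.
Proof.
case=> h1 h2; split; first by rewrite -fT -card_gs_iso.
by move=> w'; rewrite -(gK w') -fTD -card_gs_iso.
Qed.

Lemma gammaT_iso : gamma e setT = gamma e' setT.
Proof. by rewrite gamma_iso fT. Qed.

End Transport.

Lemma iso_trans (T T' : finType) (e : rel T) (e' : rel T') (h : T -> T') (m : nat)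
  (r : rel 'I_m) : bijective h -> (forall x y, e x y = e' (h x) (h y)) ->
  isomorphic e' m r -> isomorphic e m r.
Proof.
move=> bh eh [f [bf ef]]; exists (f \o h); split; first exact: bij_comp.
by move=> x y; rewrite eh ef.
Qed.

Section CocktailIso.
Variables (T : finType) (e : rel T) (s : T -> T).
Hypotheses (sK : involutive s) (sn : forall t, s t != t)
  (he : forall x y, e x y = (x != y) && (y != s x)).

Definition rk (t : T) : nat := enum_rank t.
Definition R := [set t | rk t < rk (s t)].
Definition r := enum R.

Lemma rk_inj : injective rk.
Proof. by move=> x y /val_inj /enum_rank_inj. Qed.

Lemma R_s t : (s t \in R) = (t \notin R).
Proof.
have H : rk (s t) != rk t by apply: contraNneq (sn t) => /rk_inj ->.
by rewrite !inE sK -leqNgt ltn_neqAle H.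
Qed.

Lemma cardR : #|T| = (#|R|).*2.
Proof.
have : ~: R = s @: R.
  apply/setP => t; rewrite inE; apply/idP/imsetP => [tR|[u uR ->]].
    by exists (s t); rewrite ?sK // R_s.
  by rewrite -R_s sK.
move=> H; have := cardsC R; rewrite H card_imset; last exact: inv_inj.
by rewrite addnn => <-.
Qed.

Definition rep t := if t \in R then t else s t.
Lemma rep_in t : rep t \in R.
Proof. by rewrite /rep; case: ifP => // /negbT; rewrite -R_s. Qed.

Definition fn t := if t \in R then (index t r).*2 else (index (s t) r).*2.+1.

Lemma idx_lt t : index (rep t) r < #|R|.
Proof. by rewrite cardE -/r index_mem mem_enum rep_in. Qed.

Lemma fn_lt t : fn t < #|T|.
Proof.
have := idx_lt t; rewrite cardR /fn /rep; case: ifP => _; lia.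
Qed.

Lemma fn_half t : (fn t)./2 = index (rep t) r.
Proof. by rewrite /fn /rep; case: ifP => _; rewrite /= ?doubleK ?uphalf_double. Qed.

Lemma fn_odd t : odd (fn t) = (t \notin R).
Proof. by rewrite /fn; case: ifP => _; rewrite /= ?odd_double. Qed.

Lemma rep_inj_idx x y : (index (rep x) r == index (rep y) r) = (rep x == rep y).
Proof.
apply/eqP/eqP => [|->] //.
have hx : rep x \in r by rewrite mem_enum rep_in.
by move/(congr1 (nth (rep x) r)); rewrite !nth_index // mem_enum rep_in.
Qed.

Lemma rep_eq x y : (rep x == rep y) = (y == x) || (y == s x).
Proof.
rewrite /rep; case xR: (x \in R); case yR: (y \in R) => /=.
- apply/eqP/orP => [->|[/eqP->//|/eqP ys]]; first by left.
  by move: yR; rewrite ys R_s xR.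
- apply/eqP/orP => [->|[/eqP yx|/eqP->]]; [by right; rewrite sK| |by rewrite sK].
  by move: yR; rewrite yx xR.
- apply/eqP/orP => [<-|[/eqP yx|/eqP->]]; [by right| |by []].
  by move: yR; rewrite yx xR.
- apply/eqP/orP => [/(inv_inj sK)->|[/eqP->//|/eqP ys]]; first by left.
  by move: yR; rewrite ys R_s xR.
Qed.

Lemma fn_inj : injective fn.
Proof.
move=> x y H.
have hodd : (x \in R) = (y \in R) by move: (fn_odd x); rewrite H fn_odd => /negb_inj.
have : rep x == rep y by rewrite -rep_inj_idx -!fn_half H.
rewrite rep_eq => /orP [/eqP //|/eqP ys].
by move: hodd; rewrite ys R_s; case: (x \in R).
Qed.

Lemma cocktail_ok : ~~ odd #|T| /\ isomorphic e #|T| (cocktail_rel #|T|).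
Proof.
split; first by rewrite cardR odd_double.
pose f t : 'I_#|T| := Ordinal (fn_lt t).
exists f; split.
  apply: inj_card_bij; last by rewrite card_ord.
  by move=> x y /(congr1 val) /fn_inj.
move=> x y; rewrite he /cocktail_rel /=.
have -> : (f x != f y) = (x != y).
  by congr negb; apply/eqP/eqP => [/(congr1 val) /fn_inj|->].
rewrite !fn_half rep_inj_idx rep_eq negb_or eq_sym.
by case: eqVneq.
Qed.

End CocktailIso.

Section Gamma2.
Variables (T : finType) (e : rel T).
Hypotheses (e_sym : symmetric e) (e_irr : irreflexive e) (hyp : hypo_unique e)
  (g2 : gamma e setT = 2).

Definition good (x z : T) :=
  [&& z != x, ~~ e x z & [forall t, (t != x) && (t != z) ==> e t z]].

Lemma goodP x z : reflect [/\ z != x, ~~ e x z & forall t, t != x -> t != z -> e t z]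
  (good x z).
Proof.
apply: (iffP and3P) => [[h1 h2 /forallP h3]|[h1 h2 h3]]; split => //.
  by move=> t t1 t2; move: (h3 t); rewrite t1 t2.
by apply/forallP => t; apply/implyP => /andP [t1 t2]; apply: h3.
Qed.

Lemma good_dom x z : good x z -> dominating e (setT :\ x) [set z].
Proof.
case/goodP => zx _ H; apply/domP; split; first by rewrite sub1set !inE zx.
move=> t; rewrite !inE => /andP [tx _]; case: (eqVneq t z) => [->|tz].
  by left.
by right; exists z; rewrite ?inE // H.
Qed.

Lemma n3 : 2 < #|T|.
Proof.
have := card_ge2 e_sym e_irr hyp; case: (ltnP 2 #|T|) => // h1 h2.
have n2 : #|T| = 2 by lia.
by move: (n2_K2 e_sym e_irr hyp n2).1; rewrite g2.
Qed.

Lemma A_good x : gamma e (setT :\ x) < 2 ->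
  exists z, good x z /\ forall z', good x z' -> z' = z.
Proof.
move=> lt; have [D gD uD] := gsw_ex hyp x.
have lt' : gamma e (setT :\ x) < gamma e setT by rewrite g2.
have [eqg xD nbr _] := caseA_struct lt' gD.
have g1 : gamma e (setT :\ x) = 1 by move: eqg; rewrite g2 => -[].
have /cards1P [z Dz] : #|D| == 1 by rewrite (gs_card gD) g1.
have zD : z \in D by rewrite Dz inE.
have /domP [sub H] := gs_dom gD.
exists z; split.
  apply/goodP; split.
  - by move: (subsetP sub z zD); rewrite !inE andbT.
  - exact: nbr.
  - move=> t tx tz; have : t \in setT :\ x by rewrite !inE tx.
    move/H => [|[y]]; rewrite Dz inE; first by rewrite (negbTE tz).
    by move/eqP->.
move=> z' hz'; apply/set1P; rewrite -Dz -(uD [set z']) ?inE //.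
apply: dom_gs; first exact: good_dom.
by rewrite cards1 g1.
Qed.

Lemma good_A x z : good x z -> gamma e (setT :\ x) < 2.
Proof. by move/good_dom/gamma_min; rewrite cards1. Qed.

Lemma good_pair x z u : good x z -> (u == x) || e x u -> gamma_set e setT [set z; u].
Proof.
case/goodP => zx nxz H hu; apply: dom_gs; last by rewrite cards2 g2; case: (z != u).
apply/domP; split; first exact: subsetT.
move=> t _; case: (eqVneq t z) => [->|tz]; first by left; rewrite !inE eqxx.
case: (eqVneq t u) => [->|tu]; first by left; rewrite !inE eqxx orbT.
case: (eqVneq t x) => [etx|tx].
  rewrite etx in tu *.
  case/orP: hu => [/eqP ux|exu]; first by move: tu; rewrite ux eqxx.
  by right; exists u; rewrite ?inE ?eqxx ?orbT.
by right; exists z; rewrite ?inE ?eqxx // H.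
Qed.

Lemma two_avoid y (D1 D2 : {set T}) : gamma_set e setT D1 -> gamma_set e setT D2 ->
  D1 != D2 -> y \notin D1 -> y \notin D2 -> exists z, good y z.
Proof.
move=> h1 h2 n12 y1 y2; have := caseA_two hyp h1 h2 n12 y1 y2; rewrite g2 => lt.
by have [z [hz _]] := A_good lt; exists z.
Qed.
Lemma all_good y : exists z, good y z.
Proof.
have [v ltv] := exA e_sym e_irr hyp n3; rewrite g2 in ltv.
have [z [gz _]] := A_good ltv; case/goodP: (gz) => zv nvz Hz.
have P (y1 u : T) : y1 != v -> y1 != z -> e v u -> u != y1 -> exists zy, good y1 zy.
  move=> y1v y1z evu uy1.
  have uv : u != v by apply: contraTneq evu => ->; rewrite e_irr.
  apply: (two_avoid (D1 := [set z; v]) (D2 := [set z; u])).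
  - by apply: (good_pair gz); rewrite eqxx.
  - by apply: (good_pair gz); rewrite evu orbT.
  - apply/negP => /eqP E; have : v \in [set z; u] by rewrite -E !inE eqxx orbT.
    rewrite !inE (eq_sym v z) (negbTE zv) /= => /eqP vu; by move: uv; rewrite vu eqxx.
  - by rewrite !inE negb_or y1z y1v.
  - by rewrite !inE negb_or y1z eq_sym uy1.
case: (boolP [forall y1, (y1 != v) && (y1 != z) ==> [exists u, e v u && (u != y1)]]).
  move/forallP => Ha.
  have gy : forall y1, y1 != v -> y1 != z -> exists zy, good y1 zy.
    move=> y1 y1v y1z; move: (Ha y1); rewrite y1v y1z /= => /existsP [u /andP [evu uy1]].
    exact: P y1 u y1v y1z evu uy1.
  case: (eqVneq y v) => [->|yv]; first by exists z.
  case: (eqVneq y z) => [->|yz]; last exact: gy.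
  have [y1 evy1] := no_isolated e_sym hyp v.
  have y1v : y1 != v by apply: contraTneq evy1 => ->; rewrite e_irr.
  have y1z : y1 != z by apply: contraNneq nvz => <-.
  have [zy gzy] := gy y1 y1v y1z.
  case/goodP: (gzy) => zy1 ny1 Hy1.
  have ezy : z != zy.
    apply: contraNneq ny1 => <-; exact: Hz.
  apply: (two_avoid (D1 := [set zy; y1]) (D2 := [set zy; v])).
  - by apply: (good_pair gzy); rewrite eqxx.
  - by apply: (good_pair gzy); rewrite e_sym evy1 orbT.
  - apply/negP => /eqP E; have : y1 \in [set zy; v] by rewrite -E !inE eqxx orbT.
    rewrite !inE (eq_sym y1 zy) (negbTE zy1) /= => /eqP vu; by move: y1v; rewrite vu eqxx.
  - by rewrite !inE negb_or ezy eq_sym y1z.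
  - by rewrite !inE negb_or ezy zv.
move/forallPn => [y0]; rewrite negb_imply => /andP [/andP [y0v y0z] /existsPn Nv'].
exfalso.
have Nv : forall u, e v u -> u = y0.
  move=> u evu; apply/eqP/negPn/negP => uy0; move: (Nv' u); rewrite evu uy0.
  by [].
have [u0 evu0] := no_isolated e_sym hyp v.
have evy0 : e v y0 by rewrite -(Nv u0 evu0).
have gu : forall u, u != v -> u != y0 -> u != z -> good u y0.
  move=> u uv uy0 uz.
  have y0u : y0 != u by rewrite eq_sym.
  have [zu gzu] := P u y0 uv uz evy0 y0u.
  suff <- : zu = y0 by [].
  case/goodP: (gzu) => zuu nuzu Hu.
  have zuv : zu != v.
    apply/negP => /eqP zuv; have zu' : z != u by rewrite eq_sym.
    have := Hu z zu'; rewrite zuv => /(_ zv).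
    by rewrite e_sym (negbTE nvz).
  apply: Nv; apply: Hu; rewrite // eq_sym //.
case: (boolP [exists u, [&& u != v, u != y0 & u != z]]); last first.
  move/existsPn => none.
  have : gamma e setT <= 1.
    apply: (leq_trans (gamma_min (D := [set y0]) _)); last by rewrite cards1.
    apply/domP; split; first exact: subsetT.
    move=> t _; case: (eqVneq t y0) => [->|ty0]; first by left; rewrite inE.
    right; exists y0; first by rewrite inE.
    case: (eqVneq t v) => [->//|tv].
    case: (eqVneq t z) => [->|tz]; first by rewrite e_sym Hz // eq_sym.
    by move: (none t); rewrite tv ty0 tz.
  by rewrite g2.
move/existsP => [u /and3P [uv uy0 uz]].
have onlyu : forall t, t != v -> t != y0 -> t != z -> t = u.
  move=> t tv ty0 tz; apply/eqP/negPn/negP => tu.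
  have /goodP [_ _ Hu] := gu u uv uy0 uz.
  have /goodP [_ nt _] := gu t tv ty0 tz.
  by move: nt; rewrite Hu // eq_sym.
have [zy gzy] : exists zy, good y0 zy.
  apply: (two_avoid (D1 := [set z; v]) (D2 := [set v; u])).
  - by apply: (good_pair gz); rewrite eqxx.
  - apply: dom_gs; last by rewrite cards2 g2; case: (v != u).
    apply/domP; split; first exact: subsetT.
    move=> t _; case: (eqVneq t v) => [->|tv]; first by left; rewrite !inE eqxx.
    case: (eqVneq t u) => [->|tu]; first by left; rewrite !inE eqxx orbT.
    right; case: (eqVneq t y0) => [->|ty0]; first by exists v; rewrite ?inE ?eqxx // e_sym.
    case: (eqVneq t z) => [->|tz]; first by exists u; rewrite ?inE ?eqxx ?orbT // e_sym Hz.
    by move: tu; rewrite (onlyu t tv ty0 tz) eqxx.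
  - apply/negP => /eqP E; have : z \in [set v; u] by rewrite -E !inE eqxx.
    rewrite !inE (negbTE zv) /= => /eqP vu; by move: uz; rewrite vu eqxx.
  - by rewrite !inE negb_or y0z y0v.
  - by rewrite !inE negb_or y0v eq_sym uy0.
case/goodP: gzy => zyy0 ny0 Hy0.
case: (eqVneq zy v) => [zyv|zyv]; first by move: ny0; rewrite zyv e_sym evy0.
case: (eqVneq zy z) => [zyz|zyz]; first by move: ny0; rewrite zyz Hz.
have zyu := onlyu zy zyv zyy0 zyz.
have : e v zy by apply: Hy0; rewrite // eq_sym.
by move/Nv; move/eqP: zyy0.
Qed.

Lemma cocktail_main : [/\ 4 <= #|T|, ~~ odd #|T| & isomorphic e #|T| (cocktail_rel #|T|)].
Proof.
pose phi x := odflt x [pick z | good x z].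
have gphi x : good x (phi x).
  rewrite /phi; case: pickP => [//|none]; have [z gz] := all_good x.
  by move: (none z); rewrite gz.
have phi_inj : injective phi.
  move=> x x' eq; apply/eqP/negPn/negP => xx'.
  have /goodP [_ _ Hx] := gphi x; have /goodP [zx' nx' _] := gphi x'.
  have h1 : x' != x by rewrite eq_sym.
  have h2 : x' != phi x by rewrite eq eq_sym.
  by move: nx'; rewrite -eq Hx.
case: (injF_bij phi_inj) => sg phiK sgK.
have gs t : good (sg t) t by rewrite -{2}(sgK t).
have he : forall a b, e a b = (a != b) && (b != sg a).
  move=> a b; rewrite e_sym; case/goodP: (gs a) => asa nsa Ha.
  case: (eqVneq b a) => [->|ba]; first by rewrite e_irr.
  case: (eqVneq b (sg a)) => [->|bsa] /=; first exact: negbTE.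
  by rewrite Ha.
have sn t : sg t != t by case/goodP: (gs t); rewrite eq_sym.
have sK : involutive sg.
  move=> a; apply/eqP/negPn/negP => ssa.
  have : e (sg a) a by rewrite he sn /= eq_sym ssa.
  by case/goodP: (gs a) => _ nsa _; rewrite (negbTE nsa).
have [ev iso] := cocktail_ok sK sn he.
split=> //; have := n3; move: ev; case: #|T| => [|[|[|[|]]]] //.
Qed.

End Gamma2.

Definition Gbn (bs : seq bool) (i j : nat) : bool :=
  match minn i j, maxn i j with
  | 1, 3 | 1, 4 | 2, 5 | 2, 6 => true
  | 0, 3 => nth false bs 0
  | 0, 4 => nth false bs 1
  | 0, 5 => nth false bs 2
  | 0, 6 => nth false bs 3
  | 1, 2 => nth false bs 4
  | 3, 4 => nth false bs 5
  | 3, 5 => nth false bs 6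
  | 3, 6 => nth false bs 7
  | 4, 5 => nth false bs 8
  | 4, 6 => nth false bs 9
  | 5, 6 => nth false bs 10
  | _, _ => false
  end.

Definition Gb (bs : seq bool) (i j : 'I_7) : bool := Gbn bs i j.

Inductive cert := CIso of seq nat | CIsol of nat | C1 of nat & nat
  | C2 of nat & nat & nat & nat & nat | C4 of nat & nat & nat & nat & nat & nat & nat.

Definition V7 := iota 0 7.
Definition Sw (w : nat) := filter (fun x => x != w) V7.

Definition domn (bs : seq bool) (S l : seq nat) : bool :=
  all (fun d => d \in S) l && all (fun x => (x \in l) || has (Gbn bs x) l) S.

Definition cyclen (x y : nat) := (y == x.+1 %% 7) || (x == y.+1 %% 7).

Definition cnt (l : seq nat) := count (fun k => k \in l) V7.

Definition check (bs : seq bool) (c : cert) : bool :=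
  match c with
  | CIsol w => (w < 7) && all (fun y => ~~ Gbn bs w y) V7
  | C1 a b => domn bs V7 [:: a; b]
  | C2 w a b c d =>
     [&& w < 7, cnt [:: a; b] == 2, cnt [:: c; d] == 2,
         has (fun k => k \notin [:: c; d]) [:: a; b],
         domn bs (Sw w) [:: a; b] & domn bs (Sw w) [:: c; d]]
  | C4 w a b c d f g =>
     [&& w < 7, cnt [:: a; b; c] == 3, cnt [:: d; f; g] == 3,
         has (fun k => k \notin [:: d; f; g]) [:: a; b; c],
         w \notin [:: a; b; c], w \notin [:: d; f; g],
         domn bs V7 [:: a; b; c], domn bs V7 [:: d; f; g] &
         all (fun a' => all (fun b' => ~~ domn bs (Sw w) [:: a'; b']) V7) V7]
  | CIso p =>
     [&& all (fun i => nth 0 p i < 7) V7,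
         all (fun i => all (fun j => Gbn bs i j == cyclen (nth 0 p i) (nth 0 p j)) V7) V7 &
         all (fun i => all (fun j => (nth 0 p i == nth 0 p j) ==> (i == j)) V7) V7]
  end.

Fixpoint allbits (n : nat) : seq (seq bool) :=
  if n is n'.+1 then map (cons false) (allbits n') ++ map (cons true) (allbits n')
  else [:: [::]].

Definition table : seq cert := [::
  CIsol 0;
  CIsol 0;
  CIsol 0;
  CIsol 0;
  CIsol 0;
  CIsol 0;
  CIsol 0;
  CIsol 0;
  CIsol 0;
  CIsol 0;
  CIsol 0;
  CIsol 0;
  CIsol 0;
  CIsol 0;
  CIsol 0;
  CIsol 0;
  CIsol 0;
  CIsol 0;
  CIsol 0;
  CIsol 0;
  CIsol 0;
  CIsol 0;
  CIsol 0;
  CIsol 0;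
  CIsol 0;
  CIsol 0;
  CIsol 0;
  CIsol 0;
  CIsol 0;
  CIsol 0;
  CIsol 0;
  CIsol 0;
  CIsol 0;
  CIsol 0;
  CIsol 0;
  CIsol 0;
  CIsol 0;
  CIsol 0;
  CIsol 0;
  CIsol 0;
  CIsol 0;
  CIsol 0;
  CIsol 0;
  CIsol 0;
  CIsol 0;
  CIsol 0;
  CIsol 0;
  CIsol 0;
  CIsol 0;
  CIsol 0;
  CIsol 0;
  CIsol 0;
  CIsol 0;
  CIsol 0;
  CIsol 0;
  CIsol 0;
  CIsol 0;
  CIsol 0;
  CIsol 0;
  CIsol 0;
  CIsol 0;
  CIsol 0;
  CIsol 0;
  CIsol 0;
  CIsol 0;
  CIsol 0;
  CIsol 0;
  CIsol 0;
  CIsol 0;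
  CIsol 0;
  CIsol 0;
  CIsol 0;
  CIsol 0;
  CIsol 0;
  CIsol 0;
  CIsol 0;
  CIsol 0;
  CIsol 0;
  CIsol 0;
  CIsol 0;
  CIsol 0;
  CIsol 0;
  CIsol 0;
  CIsol 0;
  CIsol 0;
  CIsol 0;
  CIsol 0;
  CIsol 0;
  CIsol 0;
  CIsol 0;
  CIsol 0;
  CIsol 0;
  CIsol 0;
  CIsol 0;
  CIsol 0;
  CIsol 0;
  CIsol 0;
  CIsol 0;
  CIsol 0;
  CIsol 0;
  CIsol 0;
  CIsol 0;
  CIsol 0;
  CIsol 0;
  CIsol 0;
  CIsol 0;
  CIsol 0;
  CIsol 0;
  CIsol 0;
  CIsol 0;
  CIsol 0;
  CIsol 0;
  CIsol 0;
  CIsol 0;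
  CIsol 0;
  CIsol 0;
  CIsol 0;
  CIsol 0;
  CIsol 0;
  CIsol 0;
  CIsol 0;
  CIsol 0;
  CIsol 0;
  CIsol 0;
  CIsol 0;
  CIsol 0;
  CIsol 0;
  CIsol 0;
  C4 2 0 1 5 1 5 6;
  C1 1 6;
  C4 1 2 3 6 3 5 6;
  C1 1 6;
  C4 1 0 3 5 3 4 6;
  C1 1 6;
  C4 1 0 3 5 2 3 6;
  C1 1 6;
  C4 1 2 4 6 4 5 6;
  C1 1 6;
  C2 1 2 6 5 6;
  C1 1 6;
  C1 4 6;
  C1 1 6;
  C1 4 6;
  C1 1 6;
  C4 1 0 4 5 3 4 6;
  C1 1 6;
  C1 3 6;
  C1 1 6;
  C2 1 0 5 5 6;
  C1 1 6;
  C1 3 6;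
  C1 1 6;
  C4 1 0 4 5 2 4 6;
  C1 1 6;
  C1 3 6;
  C1 1 6;
  C1 4 6;
  C1 1 6;
  C1 3 6;
  C1 1 6;
  C2 0 1 2 2 3;
  C1 1 6;
  C2 0 1 2 2 3;
  C1 1 6;
  C1 4 6;
  C1 1 6;
  C1 4 6;
  C1 1 6;
  C2 0 1 2 2 3;
  C1 1 6;
  C2 0 1 2 2 3;
  C1 1 6;
  C1 4 6;
  C1 1 6;
  C1 4 6;
  C1 1 6;
  C1 3 6;
  C1 1 6;
  C1 3 6;
  C1 1 6;
  C1 3 6;
  C1 1 6;
  C1 3 6;
  C1 1 6;
  C1 3 6;
  C1 1 6;
  C1 3 6;
  C1 1 6;
  C1 3 6;
  C1 1 6;
  C1 3 6;
  C1 1 6;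
  C4 2 0 1 5 1 5 6;
  C1 1 6;
  C4 1 2 3 6 3 5 6;
  C1 1 6;
  C4 1 0 3 5 3 4 6;
  C1 1 6;
  C2 0 1 2 1 4;
  C1 1 6;
  C4 1 2 4 6 4 5 6;
  C1 1 6;
  C1 2 6;
  C1 1 6;
  C1 4 6;
  C1 1 6;
  C1 2 6;
  C1 1 6;
  C4 1 0 4 5 3 4 6;
  C1 1 6;
  C1 3 6;
  C1 1 6;
  C2 0 1 2 2 5;
  C1 1 6;
  C1 3 6;
  C1 1 6;
  C2 0 1 2 1 3;
  C1 1 6;
  C1 2 6;
  C1 1 6;
  C1 4 6;
  C1 1 6;
  C1 2 6;
  C1 1 6;
  C2 0 1 2 2 3;
  C1 1 6;
  C2 0 1 2 2 3;
  C1 1 6;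
  C1 4 6;
  C1 1 6;
  C1 4 6;
  C1 1 6;
  C2 0 1 2 2 3;
  C1 1 6;
  C1 2 6;
  C1 1 6;
  C1 4 6;
  C1 1 6;
  C1 2 6;
  C1 1 6;
  C1 3 6;
  C1 1 6;
  C1 3 6;
  C1 1 6;
  C1 3 6;
  C1 1 6;
  C1 3 6;
  C1 1 6;
  C1 3 6;
  C1 1 6;
  C1 2 6;
  C1 1 6;
  C1 3 6;
  C1 1 6;
  C1 2 6;
  C1 1 6;
  C4 2 0 1 6 1 5 6;
  C1 1 5;
  C4 1 0 3 6 3 4 5;
  C1 1 5;
  C4 1 2 3 5 3 5 6;
  C1 1 5;
  C4 1 0 3 6 2 3 5;
  C1 1 5;
  C4 1 0 4 6 3 4 5;
  C1 1 5;
  C2 1 0 6 5 6;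
  C1 1 5;
  C1 3 5;
  C1 1 5;
  C1 3 5;
  C1 1 5;
  C4 1 2 4 5 4 5 6;
  C1 1 5;
  C1 4 5;
  C1 1 5;
  C2 1 2 5 5 6;
  C1 1 5;
  C1 4 5;
  C1 1 5;
  C4 1 0 4 6 2 4 5;
  C1 1 5;
  C1 4 5;
  C1 1 5;
  C1 3 5;
  C1 1 5;
  C1 3 5;
  C1 1 5;
  C2 0 1 2 2 3;
  C1 1 5;
  C1 4 5;
  C1 1 5;
  C2 0 1 2 2 3;
  C1 1 5;
  C1 4 5;
  C1 1 5;
  C1 3 5;
  C1 1 5;
  C1 3 5;
  C1 1 5;
  C1 3 5;
  C1 1 5;
  C1 3 5;
  C1 1 5;
  C2 0 1 2 2 3;
  C1 1 5;
  C1 4 5;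
  C1 1 5;
  C2 0 1 2 2 3;
  C1 1 5;
  C1 4 5;
  C1 1 5;
  C1 3 5;
  C1 1 5;
  C1 3 5;
  C1 1 5;
  C1 3 5;
  C1 1 5;
  C1 3 5;
  C1 1 5;
  C4 2 0 1 6 1 5 6;
  C1 1 5;
  C4 1 0 3 6 3 4 5;
  C1 1 5;
  C4 1 2 3 5 3 5 6;
  C1 1 5;
  C2 0 1 2 1 4;
  C1 1 5;
  C4 1 0 4 6 3 4 5;
  C1 1 5;
  C2 0 1 2 2 6;
  C1 1 5;
  C1 3 5;
  C1 1 5;
  C1 3 5;
  C1 1 5;
  C4 1 2 4 5 4 5 6;
  C1 1 5;
  C1 4 5;
  C1 1 5;
  C1 2 5;
  C1 1 5;
  C1 2 5;
  C1 1 5;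
  C2 0 1 2 1 3;
  C1 1 5;
  C1 4 5;
  C1 1 5;
  C1 2 5;
  C1 1 5;
  C1 2 5;
  C1 1 5;
  C2 0 1 2 2 3;
  C1 1 5;
  C1 4 5;
  C1 1 5;
  C2 0 1 2 2 3;
  C1 1 5;
  C1 4 5;
  C1 1 5;
  C1 3 5;
  C1 1 5;
  C1 3 5;
  C1 1 5;
  C1 3 5;
  C1 1 5;
  C1 3 5;
  C1 1 5;
  C2 0 1 2 2 3;
  C1 1 5;
  C1 4 5;
  C1 1 5;
  C1 2 5;
  C1 1 5;
  C1 2 5;
  C1 1 5;
  C1 3 5;
  C1 1 5;
  C1 3 5;
  C1 1 5;
  C1 2 5;
  C1 1 5;
  C1 2 5;
  C1 1 5;
  C4 3 0 1 2 0 1 5;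
  C1 1 5;
  C4 1 0 3 6 2 3 6;
  C1 1 5;
  C4 1 0 3 5 2 3 5;
  C1 1 5;
  C4 1 0 3 5 0 3 6;
  C1 1 5;
  C4 1 0 4 6 2 4 6;
  C1 1 5;
  C2 1 0 6 2 6;
  C1 1 5;
  C1 3 5;
  C1 1 5;
  C1 3 5;
  C1 1 5;
  C4 1 0 4 5 2 4 5;
  C1 1 5;
  C1 3 6;
  C1 1 5;
  C2 1 0 5 2 5;
  C1 1 5;
  C1 3 6;
  C1 1 5;
  C4 1 0 4 5 0 4 6;
  C1 1 5;
  C1 3 6;
  C1 1 5;
  C1 3 5;
  C1 1 5;
  C1 3 5;
  C1 1 5;
  C2 0 1 2 2 3;
  C1 1 5;
  C1 4 5;
  C1 1 5;
  C1 4 6;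
  C1 1 5;
  C1 4 5;
  C1 1 5;
  C1 3 5;
  C1 1 5;
  C1 3 5;
  C1 1 5;
  C1 3 5;
  C1 1 5;
  C1 3 5;
  C1 1 5;
  C1 3 6;
  C1 1 5;
  C1 3 6;
  C1 1 5;
  C1 3 6;
  C1 1 5;
  C1 3 6;
  C1 1 5;
  C1 3 5;
  C1 1 5;
  C1 3 5;
  C1 1 5;
  C1 3 5;
  C1 1 5;
  C1 3 5;
  C1 1 5;
  C1 0 1;
  C1 0 1;
  C1 0 1;
  C1 0 1;
  C1 0 1;
  C1 0 1;
  C1 0 1;
  C1 0 1;
  C1 0 1;
  C1 0 1;
  C1 0 1;
  C1 0 1;
  C1 0 1;
  C1 0 1;
  C1 0 1;
  C1 0 1;
  C1 0 1;
  C1 0 1;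
  C1 0 1;
  C1 0 1;
  C1 0 1;
  C1 0 1;
  C1 0 1;
  C1 0 1;
  C1 0 1;
  C1 0 1;
  C1 0 1;
  C1 0 1;
  C1 0 1;
  C1 0 1;
  C1 0 1;
  C1 0 1;
  C1 0 1;
  C1 0 1;
  C1 0 1;
  C1 0 1;
  C1 0 1;
  C1 0 1;
  C1 0 1;
  C1 0 1;
  C1 0 1;
  C1 0 1;
  C1 0 1;
  C1 0 1;
  C1 0 1;
  C1 0 1;
  C1 0 1;
  C1 0 1;
  C1 0 1;
  C1 0 1;
  C1 0 1;
  C1 0 1;
  C1 0 1;
  C1 0 1;
  C1 0 1;
  C1 0 1;
  C1 0 1;
  C1 0 1;
  C1 0 1;
  C1 0 1;
  C1 0 1;
  C1 0 1;
  C1 0 1;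
  C1 0 1;
  C4 1 0 2 3 2 3 4;
  C2 0 1 2 1 5;
  C4 1 0 2 3 2 3 4;
  C2 0 1 2 1 5;
  C4 1 0 2 3 2 3 4;
  C2 0 1 2 1 5;
  C4 1 0 2 3 2 3 4;
  C2 0 1 2 1 5;
  C4 1 0 2 3 0 3 5;
  C1 4 6;
  C4 1 0 2 3 0 3 5;
  C1 4 6;
  C1 4 6;
  C1 4 6;
  C1 4 6;
  C1 4 6;
  C4 1 0 2 3 0 3 6;
  C1 4 5;
  C1 4 5;
  C1 4 5;
  C4 1 0 2 3 0 3 6;
  C1 4 5;
  C1 4 5;
  C1 4 5;
  C4 1 0 2 3 0 3 5;
  C1 4 5;
  C1 4 5;
  C1 4 5;
  C1 4 6;
  C1 4 5;
  C1 4 5;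
  C1 4 5;
  C1 2 4;
  C1 2 4;
  C1 2 4;
  C1 2 4;
  C1 2 4;
  C1 2 4;
  C1 2 4;
  C1 2 4;
  C1 2 4;
  C1 2 4;
  C1 2 4;
  C1 2 4;
  C1 2 4;
  C1 2 4;
  C1 2 4;
  C1 2 4;
  C1 2 4;
  C1 2 4;
  C1 2 4;
  C1 2 4;
  C1 2 4;
  C1 2 4;
  C1 2 4;
  C1 2 4;
  C1 2 4;
  C1 2 4;
  C1 2 4;
  C1 2 4;
  C1 2 4;
  C1 2 4;
  C1 2 4;
  C1 2 4;
  C4 1 0 2 3 2 3 4;
  C2 0 1 2 1 5;
  C4 1 0 2 3 2 3 4;
  C2 0 1 2 1 5;
  C4 1 0 2 3 2 3 4;
  C2 0 1 2 1 5;
  C1 1 4;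
  C1 1 4;
  C4 1 0 2 3 0 2 6;
  C1 4 6;
  C2 0 1 2 2 6;
  C1 4 6;
  C1 4 6;
  C1 4 6;
  C1 1 4;
  C1 1 4;
  C4 1 0 2 3 0 2 5;
  C1 4 5;
  C1 4 5;
  C1 4 5;
  C2 0 1 2 2 5;
  C1 4 5;
  C1 1 4;
  C1 1 4;
  C2 0 1 2 1 3;
  C1 4 5;
  C1 4 5;
  C1 4 5;
  C1 4 6;
  C1 4 5;
  C1 1 4;
  C1 1 4;
  C1 2 4;
  C1 2 4;
  C1 2 4;
  C1 2 4;
  C1 2 4;
  C1 2 4;
  C1 1 4;
  C1 1 4;
  C1 2 4;
  C1 2 4;
  C1 2 4;
  C1 2 4;
  C1 2 4;
  C1 2 4;
  C1 1 4;
  C1 1 4;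
  C1 2 4;
  C1 2 4;
  C1 2 4;
  C1 2 4;
  C1 2 4;
  C1 2 4;
  C1 1 4;
  C1 1 4;
  C1 2 4;
  C1 2 4;
  C1 2 4;
  C1 2 4;
  C1 2 4;
  C1 2 4;
  C1 1 4;
  C1 1 4;
  C4 1 0 2 3 0 3 5;
  C1 1 6;
  C4 1 0 2 3 0 3 5;
  C1 1 6;
  C4 1 0 2 3 0 3 5;
  C1 1 6;
  C4 1 0 2 3 0 3 5;
  C1 1 6;
  C4 1 0 2 3 0 3 5;
  C1 1 6;
  C2 1 2 6 5 6;
  C1 1 6;
  C1 4 6;
  C1 1 6;
  C1 4 6;
  C1 1 6;
  CIso [:: 0; 2; 5; 3; 1; 4; 6];
  C1 1 6;
  C1 3 6;
  C1 1 6;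
  C2 1 0 5 5 6;
  C1 1 6;
  C1 3 6;
  C1 1 6;
  C2 2 0 3 3 4;
  C1 1 6;
  C1 3 6;
  C1 1 6;
  C1 4 6;
  C1 1 6;
  C1 3 6;
  C1 1 6;
  C1 2 4;
  C1 1 6;
  C1 2 4;
  C1 1 6;
  C1 2 4;
  C1 1 6;
  C1 2 4;
  C1 1 6;
  C1 2 4;
  C1 1 6;
  C1 2 4;
  C1 1 6;
  C1 2 4;
  C1 1 6;
  C1 2 4;
  C1 1 6;
  C1 2 4;
  C1 1 6;
  C1 2 4;
  C1 1 6;
  C1 2 4;
  C1 1 6;
  C1 2 4;
  C1 1 6;
  C1 2 4;
  C1 1 6;
  C1 2 4;
  C1 1 6;
  C1 2 4;
  C1 1 6;
  C1 2 4;
  C1 1 6;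
  C4 1 0 2 3 0 3 5;
  C1 1 6;
  C4 1 0 2 3 0 3 5;
  C1 1 6;
  C4 1 0 2 3 0 3 5;
  C1 1 6;
  C1 1 4;
  C1 1 4;
  C4 1 0 2 3 0 2 6;
  C1 1 6;
  C1 2 6;
  C1 1 6;
  C1 4 6;
  C1 1 6;
  C1 1 4;
  C1 1 4;
  C2 3 0 2 2 4;
  C1 1 6;
  C1 3 6;
  C1 1 6;
  C2 0 1 2 2 5;
  C1 1 6;
  C1 1 4;
  C1 1 4;
  C2 0 1 2 1 3;
  C1 1 6;
  C1 2 6;
  C1 1 6;
  C1 4 6;
  C1 1 6;
  C1 1 4;
  C1 1 4;
  C1 2 4;
  C1 1 6;
  C1 2 4;
  C1 1 6;
  C1 2 4;
  C1 1 6;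
  C1 1 4;
  C1 1 4;
  C1 2 4;
  C1 1 6;
  C1 2 4;
  C1 1 6;
  C1 2 4;
  C1 1 6;
  C1 1 4;
  C1 1 4;
  C1 2 4;
  C1 1 6;
  C1 2 4;
  C1 1 6;
  C1 2 4;
  C1 1 6;
  C1 1 4;
  C1 1 4;
  C1 2 4;
  C1 1 6;
  C1 2 4;
  C1 1 6;
  C1 2 4;
  C1 1 6;
  C1 1 4;
  C1 1 4;
  C4 1 0 2 3 0 3 6;
  C1 1 5;
  C4 1 0 2 3 0 3 6;
  C1 1 5;
  C4 1 0 2 3 0 3 6;
  C1 1 5;
  C4 1 0 2 3 0 3 6;
  C1 1 5;
  CIso [:: 0; 2; 5; 3; 1; 6; 4];
  C1 1 5;
  C2 1 0 6 5 6;
  C1 1 5;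
  C1 3 5;
  C1 1 5;
  C1 3 5;
  C1 1 5;
  C4 1 0 2 3 0 3 6;
  C1 1 5;
  C1 4 5;
  C1 1 5;
  C2 1 2 5 5 6;
  C1 1 5;
  C1 4 5;
  C1 1 5;
  C2 2 0 3 3 4;
  C1 1 5;
  C1 4 5;
  C1 1 5;
  C1 3 5;
  C1 1 5;
  C1 3 5;
  C1 1 5;
  C1 2 4;
  C1 1 5;
  C1 2 4;
  C1 1 5;
  C1 2 4;
  C1 1 5;
  C1 2 4;
  C1 1 5;
  C1 2 4;
  C1 1 5;
  C1 2 4;
  C1 1 5;
  C1 2 4;
  C1 1 5;
  C1 2 4;
  C1 1 5;
  C1 2 4;
  C1 1 5;
  C1 2 4;
  C1 1 5;
  C1 2 4;
  C1 1 5;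
  C1 2 4;
  C1 1 5;
  C1 2 4;
  C1 1 5;
  C1 2 4;
  C1 1 5;
  C1 2 4;
  C1 1 5;
  C1 2 4;
  C1 1 5;
  C4 1 0 2 3 0 3 6;
  C1 1 5;
  C4 1 0 2 3 0 3 6;
  C1 1 5;
  C4 1 0 2 3 0 3 6;
  C1 1 5;
  C1 1 4;
  C1 1 4;
  C2 3 0 2 2 4;
  C1 1 5;
  C2 0 1 2 2 6;
  C1 1 5;
  C1 3 5;
  C1 1 5;
  C1 1 4;
  C1 1 4;
  C4 1 0 2 3 0 2 5;
  C1 1 5;
  C1 4 5;
  C1 1 5;
  C1 2 5;
  C1 1 5;
  C1 1 4;
  C1 1 4;
  C2 0 1 2 1 3;
  C1 1 5;
  C1 4 5;
  C1 1 5;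
  C1 2 5;
  C1 1 5;
  C1 1 4;
  C1 1 4;
  C1 2 4;
  C1 1 5;
  C1 2 4;
  C1 1 5;
  C1 2 4;
  C1 1 5;
  C1 1 4;
  C1 1 4;
  C1 2 4;
  C1 1 5;
  C1 2 4;
  C1 1 5;
  C1 2 4;
  C1 1 5;
  C1 1 4;
  C1 1 4;
  C1 2 4;
  C1 1 5;
  C1 2 4;
  C1 1 5;
  C1 2 4;
  C1 1 5;
  C1 1 4;
  C1 1 4;
  C1 2 4;
  C1 1 5;
  C1 2 4;
  C1 1 5;
  C1 2 4;
  C1 1 5;
  C1 1 4;
  C1 1 4;
  C4 1 0 2 3 0 3 5;
  C1 1 5;
  C4 1 0 2 3 0 3 5;
  C1 1 5;
  C4 1 0 2 3 0 3 5;
  C1 1 5;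
  C4 1 0 2 3 0 3 5;
  C1 1 5;
  C2 2 0 1 0 3;
  C1 1 5;
  C2 1 0 6 2 6;
  C1 1 5;
  C1 3 5;
  C1 1 5;
  C1 3 5;
  C1 1 5;
  C2 2 0 1 0 3;
  C1 1 5;
  C1 3 6;
  C1 1 5;
  C2 1 0 5 2 5;
  C1 1 5;
  C1 3 6;
  C1 1 5;
  C2 1 0 5 0 6;
  C1 1 5;
  C1 3 6;
  C1 1 5;
  C1 3 5;
  C1 1 5;
  C1 3 5;
  C1 1 5;
  C1 2 4;
  C1 1 5;
  C1 2 4;
  C1 1 5;
  C1 2 4;
  C1 1 5;
  C1 2 4;
  C1 1 5;
  C1 2 4;
  C1 1 5;
  C1 2 4;
  C1 1 5;
  C1 2 4;
  C1 1 5;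
  C1 2 4;
  C1 1 5;
  C1 2 4;
  C1 1 5;
  C1 2 4;
  C1 1 5;
  C1 2 4;
  C1 1 5;
  C1 2 4;
  C1 1 5;
  C1 2 4;
  C1 1 5;
  C1 2 4;
  C1 1 5;
  C1 2 4;
  C1 1 5;
  C1 2 4;
  C1 1 5;
  C1 0 1;
  C1 0 1;
  C1 0 1;
  C1 0 1;
  C1 0 1;
  C1 0 1;
  C1 0 1;
  C1 0 1;
  C1 0 1;
  C1 0 1;
  C1 0 1;
  C1 0 1;
  C1 0 1;
  C1 0 1;
  C1 0 1;
  C1 0 1;
  C1 0 1;
  C1 0 1;
  C1 0 1;
  C1 0 1;
  C1 0 1;
  C1 0 1;
  C1 0 1;
  C1 0 1;
  C1 0 1;
  C1 0 1;
  C1 0 1;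
  C1 0 1;
  C1 0 1;
  C1 0 1;
  C1 0 1;
  C1 0 1;
  C1 0 1;
  C1 0 1;
  C1 0 1;
  C1 0 1;
  C1 0 1;
  C1 0 1;
  C1 0 1;
  C1 0 1;
  C1 0 1;
  C1 0 1;
  C1 0 1;
  C1 0 1;
  C1 0 1;
  C1 0 1;
  C1 0 1;
  C1 0 1;
  C1 0 1;
  C1 0 1;
  C1 0 1;
  C1 0 1;
  C1 0 1;
  C1 0 1;
  C1 0 1;
  C1 0 1;
  C1 0 1;
  C1 0 1;
  C1 0 1;
  C1 0 1;
  C1 0 1;
  C1 0 1;
  C1 0 1;
  C1 0 1;
  C4 1 0 2 4 2 3 4;
  C2 0 1 2 1 5;
  C4 1 0 2 4 0 4 5;
  C1 3 6;
  C4 1 0 2 4 0 4 6;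
  C1 3 5;
  C4 1 0 2 4 0 4 5;
  C1 3 5;
  C4 1 0 2 4 2 3 4;
  C2 0 1 2 1 5;
  C4 1 0 2 4 0 4 5;
  C1 3 6;
  C1 3 5;
  C1 3 5;
  C1 3 5;
  C1 3 5;
  C4 1 0 2 4 2 3 4;
  C2 0 1 2 1 5;
  C1 3 6;
  C1 3 6;
  C4 1 0 2 4 0 4 6;
  C1 3 5;
  C1 3 6;
  C1 3 5;
  C4 1 0 2 4 2 3 4;
  C2 0 1 2 1 5;
  C1 3 6;
  C1 3 6;
  C1 3 5;
  C1 3 5;
  C1 3 5;
  C1 3 5;
  C1 2 3;
  C1 2 3;
  C1 2 3;
  C1 2 3;
  C1 2 3;
  C1 2 3;
  C1 2 3;
  C1 2 3;
  C1 2 3;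
  C1 2 3;
  C1 2 3;
  C1 2 3;
  C1 2 3;
  C1 2 3;
  C1 2 3;
  C1 2 3;
  C1 2 3;
  C1 2 3;
  C1 2 3;
  C1 2 3;
  C1 2 3;
  C1 2 3;
  C1 2 3;
  C1 2 3;
  C1 2 3;
  C1 2 3;
  C1 2 3;
  C1 2 3;
  C1 2 3;
  C1 2 3;
  C1 2 3;
  C1 2 3;
  C4 1 0 2 4 2 3 4;
  C2 0 1 2 1 5;
  C4 1 0 2 4 0 2 6;
  C1 3 6;
  C4 1 0 2 4 0 2 5;
  C1 3 5;
  C2 0 1 2 1 4;
  C1 3 5;
  C4 1 0 2 4 2 3 4;
  C2 0 1 2 1 5;
  C2 0 1 2 2 6;
  C1 3 6;
  C1 3 5;
  C1 3 5;
  C1 3 5;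
  C1 3 5;
  C4 1 0 2 4 2 3 4;
  C2 0 1 2 1 5;
  C1 3 6;
  C1 3 6;
  C2 0 1 2 2 5;
  C1 3 5;
  C1 3 6;
  C1 3 5;
  C1 1 3;
  C1 1 3;
  C1 1 3;
  C1 1 3;
  C1 1 3;
  C1 1 3;
  C1 1 3;
  C1 1 3;
  C1 2 3;
  C1 2 3;
  C1 2 3;
  C1 2 3;
  C1 2 3;
  C1 2 3;
  C1 2 3;
  C1 2 3;
  C1 2 3;
  C1 2 3;
  C1 2 3;
  C1 2 3;
  C1 2 3;
  C1 2 3;
  C1 2 3;
  C1 2 3;
  C1 2 3;
  C1 2 3;
  C1 2 3;
  C1 2 3;
  C1 2 3;
  C1 2 3;
  C1 2 3;
  C1 2 3;
  C1 1 3;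
  C1 1 3;
  C1 1 3;
  C1 1 3;
  C1 1 3;
  C1 1 3;
  C1 1 3;
  C1 1 3;
  C4 1 0 2 4 0 4 5;
  C1 1 6;
  C4 1 0 2 4 0 4 5;
  C1 1 6;
  CIso [:: 0; 2; 5; 1; 3; 4; 6];
  C1 1 6;
  C2 2 0 4 3 4;
  C1 1 6;
  C4 1 0 2 4 0 4 5;
  C1 1 6;
  C2 1 2 6 5 6;
  C1 1 6;
  C1 3 5;
  C1 1 6;
  C1 3 5;
  C1 1 6;
  C4 1 0 2 4 0 4 5;
  C1 1 6;
  C1 3 6;
  C1 1 6;
  C2 1 0 5 5 6;
  C1 1 6;
  C1 3 6;
  C1 1 6;
  C4 1 0 2 4 0 4 5;
  C1 1 6;
  C1 3 6;
  C1 1 6;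
  C1 3 5;
  C1 1 6;
  C1 3 5;
  C1 1 6;
  C1 2 3;
  C1 1 6;
  C1 2 3;
  C1 1 6;
  C1 2 3;
  C1 1 6;
  C1 2 3;
  C1 1 6;
  C1 2 3;
  C1 1 6;
  C1 2 3;
  C1 1 6;
  C1 2 3;
  C1 1 6;
  C1 2 3;
  C1 1 6;
  C1 2 3;
  C1 1 6;
  C1 2 3;
  C1 1 6;
  C1 2 3;
  C1 1 6;
  C1 2 3;
  C1 1 6;
  C1 2 3;
  C1 1 6;
  C1 2 3;
  C1 1 6;
  C1 2 3;
  C1 1 6;
  C1 2 3;
  C1 1 6;
  C4 1 0 2 4 0 4 5;
  C1 1 6;
  C4 1 0 2 4 0 2 6;
  C1 1 6;
  C2 4 0 2 2 3;
  C1 1 6;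
  C2 0 1 2 1 4;
  C1 1 6;
  C4 1 0 2 4 0 4 5;
  C1 1 6;
  C1 2 6;
  C1 1 6;
  C1 3 5;
  C1 1 6;
  C1 2 6;
  C1 1 6;
  C4 1 0 2 4 0 4 5;
  C1 1 6;
  C1 3 6;
  C1 1 6;
  C2 0 1 2 2 5;
  C1 1 6;
  C1 3 6;
  C1 1 6;
  C1 1 3;
  C1 1 3;
  C1 1 3;
  C1 1 3;
  C1 1 3;
  C1 1 3;
  C1 1 3;
  C1 1 3;
  C1 2 3;
  C1 1 6;
  C1 2 3;
  C1 1 6;
  C1 2 3;
  C1 1 6;
  C1 2 3;
  C1 1 6;
  C1 2 3;
  C1 1 6;
  C1 2 3;
  C1 1 6;
  C1 2 3;
  C1 1 6;
  C1 2 3;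
  C1 1 6;
  C1 2 3;
  C1 1 6;
  C1 2 3;
  C1 1 6;
  C1 2 3;
  C1 1 6;
  C1 2 3;
  C1 1 6;
  C1 1 3;
  C1 1 3;
  C1 1 3;
  C1 1 3;
  C1 1 3;
  C1 1 3;
  C1 1 3;
  C1 1 3;
  C4 1 0 2 4 0 4 6;
  C1 1 5;
  CIso [:: 0; 2; 5; 1; 3; 6; 4];
  C1 1 5;
  C4 1 0 2 4 0 4 6;
  C1 1 5;
  C2 2 0 4 3 4;
  C1 1 5;
  C4 1 0 2 4 0 4 6;
  C1 1 5;
  C2 1 0 6 5 6;
  C1 1 5;
  C1 3 5;
  C1 1 5;
  C1 3 5;
  C1 1 5;
  C4 1 0 2 4 0 4 6;
  C1 1 5;
  C1 3 6;
  C1 1 5;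
  C2 1 2 5 5 6;
  C1 1 5;
  C1 3 6;
  C1 1 5;
  C4 1 0 2 4 0 4 6;
  C1 1 5;
  C1 3 6;
  C1 1 5;
  C1 3 5;
  C1 1 5;
  C1 3 5;
  C1 1 5;
  C1 2 3;
  C1 1 5;
  C1 2 3;
  C1 1 5;
  C1 2 3;
  C1 1 5;
  C1 2 3;
  C1 1 5;
  C1 2 3;
  C1 1 5;
  C1 2 3;
  C1 1 5;
  C1 2 3;
  C1 1 5;
  C1 2 3;
  C1 1 5;
  C1 2 3;
  C1 1 5;
  C1 2 3;
  C1 1 5;
  C1 2 3;
  C1 1 5;
  C1 2 3;
  C1 1 5;
  C1 2 3;
  C1 1 5;
  C1 2 3;
  C1 1 5;
  C1 2 3;
  C1 1 5;
  C1 2 3;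
  C1 1 5;
  C4 1 0 2 4 0 4 6;
  C1 1 5;
  C2 4 0 2 2 3;
  C1 1 5;
  C4 1 0 2 4 0 2 5;
  C1 1 5;
  C2 0 1 2 1 4;
  C1 1 5;
  C4 1 0 2 4 0 4 6;
  C1 1 5;
  C2 0 1 2 2 6;
  C1 1 5;
  C1 3 5;
  C1 1 5;
  C1 3 5;
  C1 1 5;
  C4 1 0 2 4 0 4 6;
  C1 1 5;
  C1 3 6;
  C1 1 5;
  C1 2 5;
  C1 1 5;
  C1 2 5;
  C1 1 5;
  C1 1 3;
  C1 1 3;
  C1 1 3;
  C1 1 3;
  C1 1 3;
  C1 1 3;
  C1 1 3;
  C1 1 3;
  C1 2 3;
  C1 1 5;
  C1 2 3;
  C1 1 5;
  C1 2 3;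
  C1 1 5;
  C1 2 3;
  C1 1 5;
  C1 2 3;
  C1 1 5;
  C1 2 3;
  C1 1 5;
  C1 2 3;
  C1 1 5;
  C1 2 3;
  C1 1 5;
  C1 2 3;
  C1 1 5;
  C1 2 3;
  C1 1 5;
  C1 2 3;
  C1 1 5;
  C1 2 3;
  C1 1 5;
  C1 1 3;
  C1 1 3;
  C1 1 3;
  C1 1 3;
  C1 1 3;
  C1 1 3;
  C1 1 3;
  C1 1 3;
  C4 1 0 2 4 0 4 5;
  C1 1 5;
  C2 2 0 1 0 4;
  C1 1 5;
  C2 2 0 1 0 4;
  C1 1 5;
  C2 1 0 5 0 6;
  C1 1 5;
  C4 1 0 2 4 0 4 5;
  C1 1 5;
  C2 1 0 6 2 6;
  C1 1 5;
  C1 3 5;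
  C1 1 5;
  C1 3 5;
  C1 1 5;
  C4 1 0 2 4 0 4 5;
  C1 1 5;
  C1 3 6;
  C1 1 5;
  C2 1 0 5 2 5;
  C1 1 5;
  C1 3 6;
  C1 1 5;
  C4 1 0 2 4 0 4 5;
  C1 1 5;
  C1 3 6;
  C1 1 5;
  C1 3 5;
  C1 1 5;
  C1 3 5;
  C1 1 5;
  C1 2 3;
  C1 1 5;
  C1 2 3;
  C1 1 5;
  C1 2 3;
  C1 1 5;
  C1 2 3;
  C1 1 5;
  C1 2 3;
  C1 1 5;
  C1 2 3;
  C1 1 5;
  C1 2 3;
  C1 1 5;
  C1 2 3;
  C1 1 5;
  C1 2 3;
  C1 1 5;
  C1 2 3;
  C1 1 5;
  C1 2 3;
  C1 1 5;
  C1 2 3;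
  C1 1 5;
  C1 2 3;
  C1 1 5;
  C1 2 3;
  C1 1 5;
  C1 2 3;
  C1 1 5;
  C1 2 3;
  C1 1 5;
  C1 0 1;
  C1 0 1;
  C1 0 1;
  C1 0 1;
  C1 0 1;
  C1 0 1;
  C1 0 1;
  C1 0 1;
  C1 0 1;
  C1 0 1;
  C1 0 1;
  C1 0 1;
  C1 0 1;
  C1 0 1;
  C1 0 1;
  C1 0 1;
  C1 0 1;
  C1 0 1;
  C1 0 1;
  C1 0 1;
  C1 0 1;
  C1 0 1;
  C1 0 1;
  C1 0 1;
  C1 0 1;
  C1 0 1;
  C1 0 1;
  C1 0 1;
  C1 0 1;
  C1 0 1;
  C1 0 1;
  C1 0 1;
  C1 0 1;
  C1 0 1;
  C1 0 1;
  C1 0 1;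
  C1 0 1;
  C1 0 1;
  C1 0 1;
  C1 0 1;
  C1 0 1;
  C1 0 1;
  C1 0 1;
  C1 0 1;
  C1 0 1;
  C1 0 1;
  C1 0 1;
  C1 0 1;
  C1 0 1;
  C1 0 1;
  C1 0 1;
  C1 0 1;
  C1 0 1;
  C1 0 1;
  C1 0 1;
  C1 0 1;
  C1 0 1;
  C1 0 1;
  C1 0 1;
  C1 0 1;
  C1 0 1;
  C1 0 1;
  C1 0 1;
  C1 0 1;
  C4 5 0 1 2 0 2 3;
  C2 0 1 2 1 5;
  C4 2 0 4 5 1 4 5;
  C1 3 6;
  C4 2 0 4 6 1 4 6;
  C1 3 5;
  C2 2 0 4 1 4;
  C1 3 5;
  C4 2 0 3 5 1 3 5;
  C1 4 6;
  C4 2 0 3 5 0 4 5;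
  C1 3 6;
  C1 3 5;
  C1 3 5;
  C1 3 5;
  C1 3 5;
  C4 2 0 3 6 1 3 6;
  C1 4 5;
  C1 3 6;
  C1 3 6;
  C4 2 0 3 6 0 4 6;
  C1 3 5;
  C1 3 6;
  C1 3 5;
  C2 2 0 3 1 3;
  C1 4 5;
  C1 3 6;
  C1 3 6;
  C1 3 5;
  C1 3 5;
  C1 3 5;
  C1 3 5;
  C1 2 3;
  C1 2 3;
  C1 2 3;
  C1 2 3;
  C1 2 3;
  C1 2 3;
  C1 2 3;
  C1 2 3;
  C1 2 3;
  C1 2 3;
  C1 2 3;
  C1 2 3;
  C1 2 3;
  C1 2 3;
  C1 2 3;
  C1 2 3;
  C1 2 3;
  C1 2 3;
  C1 2 3;
  C1 2 3;
  C1 2 3;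
  C1 2 3;
  C1 2 3;
  C1 2 3;
  C1 2 3;
  C1 2 3;
  C1 2 3;
  C1 2 3;
  C1 2 3;
  C1 2 3;
  C1 2 3;
  C1 2 3;
  C1 0 2;
  C1 0 2;
  C1 0 2;
  C1 0 2;
  C1 0 2;
  C1 0 2;
  C1 0 2;
  C1 0 2;
  C1 0 2;
  C1 0 2;
  C1 0 2;
  C1 0 2;
  C1 0 2;
  C1 0 2;
  C1 0 2;
  C1 0 2;
  C1 0 2;
  C1 0 2;
  C1 0 2;
  C1 0 2;
  C1 0 2;
  C1 0 2;
  C1 0 2;
  C1 0 2;
  C1 0 2;
  C1 0 2;
  C1 0 2;
  C1 0 2;
  C1 0 2;
  C1 0 2;
  C1 0 2;
  C1 0 2;
  C1 0 2;
  C1 0 2;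
  C1 0 2;
  C1 0 2;
  C1 0 2;
  C1 0 2;
  C1 0 2;
  C1 0 2;
  C1 0 2;
  C1 0 2;
  C1 0 2;
  C1 0 2;
  C1 0 2;
  C1 0 2;
  C1 0 2;
  C1 0 2;
  C1 0 2;
  C1 0 2;
  C1 0 2;
  C1 0 2;
  C1 0 2;
  C1 0 2;
  C1 0 2;
  C1 0 2;
  C1 0 2;
  C1 0 2;
  C1 0 2;
  C1 0 2;
  C1 0 2;
  C1 0 2;
  C1 0 2;
  C1 0 2;
  C2 1 0 2 0 5;
  C1 1 6;
  C2 1 0 2 0 5;
  C1 1 6;
  C2 1 0 2 0 5;
  C1 1 6;
  C2 1 0 2 0 5;
  C1 1 6;
  C2 1 0 2 0 5;
  C1 1 6;
  C2 1 0 2 0 5;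
  C1 1 6;
  C1 3 5;
  C1 1 6;
  C1 3 5;
  C1 1 6;
  C2 1 0 2 0 5;
  C1 1 6;
  C1 3 6;
  C1 1 6;
  C2 1 0 2 0 5;
  C1 1 6;
  C1 3 6;
  C1 1 6;
  C2 1 0 2 0 5;
  C1 1 6;
  C1 3 6;
  C1 1 6;
  C1 3 5;
  C1 1 6;
  C1 3 5;
  C1 1 6;
  C1 2 3;
  C1 1 6;
  C1 2 3;
  C1 1 6;
  C1 2 3;
  C1 1 6;
  C1 2 3;
  C1 1 6;
  C1 2 3;
  C1 1 6;
  C1 2 3;
  C1 1 6;
  C1 2 3;
  C1 1 6;
  C1 2 3;
  C1 1 6;
  C1 2 3;
  C1 1 6;
  C1 2 3;
  C1 1 6;
  C1 2 3;
  C1 1 6;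
  C1 2 3;
  C1 1 6;
  C1 2 3;
  C1 1 6;
  C1 2 3;
  C1 1 6;
  C1 2 3;
  C1 1 6;
  C1 2 3;
  C1 1 6;
  C1 0 2;
  C1 0 2;
  C1 0 2;
  C1 0 2;
  C1 0 2;
  C1 0 2;
  C1 0 2;
  C1 0 2;
  C1 0 2;
  C1 0 2;
  C1 0 2;
  C1 0 2;
  C1 0 2;
  C1 0 2;
  C1 0 2;
  C1 0 2;
  C1 0 2;
  C1 0 2;
  C1 0 2;
  C1 0 2;
  C1 0 2;
  C1 0 2;
  C1 0 2;
  C1 0 2;
  C1 0 2;
  C1 0 2;
  C1 0 2;
  C1 0 2;
  C1 0 2;
  C1 0 2;
  C1 0 2;
  C1 0 2;
  C1 0 2;
  C1 0 2;
  C1 0 2;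
  C1 0 2;
  C1 0 2;
  C1 0 2;
  C1 0 2;
  C1 0 2;
  C1 0 2;
  C1 0 2;
  C1 0 2;
  C1 0 2;
  C1 0 2;
  C1 0 2;
  C1 0 2;
  C1 0 2;
  C1 0 2;
  C1 0 2;
  C1 0 2;
  C1 0 2;
  C1 0 2;
  C1 0 2;
  C1 0 2;
  C1 0 2;
  C1 0 2;
  C1 0 2;
  C1 0 2;
  C1 0 2;
  C1 0 2;
  C1 0 2;
  C1 0 2;
  C1 0 2;
  C2 1 0 2 0 6;
  C1 1 5;
  C2 1 0 2 0 6;
  C1 1 5;
  C2 1 0 2 0 6;
  C1 1 5;
  C2 1 0 2 0 6;
  C1 1 5;
  C2 1 0 2 0 6;
  C1 1 5;
  C2 1 0 2 0 6;
  C1 1 5;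
  C1 3 5;
  C1 1 5;
  C1 3 5;
  C1 1 5;
  C2 1 0 2 0 6;
  C1 1 5;
  C1 3 6;
  C1 1 5;
  C2 1 0 2 0 6;
  C1 1 5;
  C1 3 6;
  C1 1 5;
  C2 1 0 2 0 6;
  C1 1 5;
  C1 3 6;
  C1 1 5;
  C1 3 5;
  C1 1 5;
  C1 3 5;
  C1 1 5;
  C1 2 3;
  C1 1 5;
  C1 2 3;
  C1 1 5;
  C1 2 3;
  C1 1 5;
  C1 2 3;
  C1 1 5;
  C1 2 3;
  C1 1 5;
  C1 2 3;
  C1 1 5;
  C1 2 3;
  C1 1 5;
  C1 2 3;
  C1 1 5;
  C1 2 3;
  C1 1 5;
  C1 2 3;
  C1 1 5;
  C1 2 3;
  C1 1 5;
  C1 2 3;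
  C1 1 5;
  C1 2 3;
  C1 1 5;
  C1 2 3;
  C1 1 5;
  C1 2 3;
  C1 1 5;
  C1 2 3;
  C1 1 5;
  C1 0 2;
  C1 0 2;
  C1 0 2;
  C1 0 2;
  C1 0 2;
  C1 0 2;
  C1 0 2;
  C1 0 2;
  C1 0 2;
  C1 0 2;
  C1 0 2;
  C1 0 2;
  C1 0 2;
  C1 0 2;
  C1 0 2;
  C1 0 2;
  C1 0 2;
  C1 0 2;
  C1 0 2;
  C1 0 2;
  C1 0 2;
  C1 0 2;
  C1 0 2;
  C1 0 2;
  C1 0 2;
  C1 0 2;
  C1 0 2;
  C1 0 2;
  C1 0 2;
  C1 0 2;
  C1 0 2;
  C1 0 2;
  C1 0 2;
  C1 0 2;
  C1 0 2;
  C1 0 2;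
  C1 0 2;
  C1 0 2;
  C1 0 2;
  C1 0 2;
  C1 0 2;
  C1 0 2;
  C1 0 2;
  C1 0 2;
  C1 0 2;
  C1 0 2;
  C1 0 2;
  C1 0 2;
  C1 0 2;
  C1 0 2;
  C1 0 2;
  C1 0 2;
  C1 0 2;
  C1 0 2;
  C1 0 2;
  C1 0 2;
  C1 0 2;
  C1 0 2;
  C1 0 2;
  C1 0 2;
  C1 0 2;
  C1 0 2;
  C1 0 2;
  C1 0 2;
  C2 1 0 2 0 5;
  C1 1 5;
  C2 1 0 2 0 5;
  C1 1 5;
  C2 1 0 2 0 5;
  C1 1 5;
  C2 1 0 2 0 5;
  C1 1 5;
  C2 1 0 2 0 5;
  C1 1 5;
  C2 1 0 2 0 5;
  C1 1 5;
  C1 3 5;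
  C1 1 5;
  C1 3 5;
  C1 1 5;
  C2 1 0 2 0 5;
  C1 1 5;
  C1 3 6;
  C1 1 5;
  C2 1 0 2 0 5;
  C1 1 5;
  C1 3 6;
  C1 1 5;
  C2 1 0 2 0 5;
  C1 1 5;
  C1 3 6;
  C1 1 5;
  C1 3 5;
  C1 1 5;
  C1 3 5;
  C1 1 5;
  C1 2 3;
  C1 1 5;
  C1 2 3;
  C1 1 5;
  C1 2 3;
  C1 1 5;
  C1 2 3;
  C1 1 5;
  C1 2 3;
  C1 1 5;
  C1 2 3;
  C1 1 5;
  C1 2 3;
  C1 1 5;
  C1 2 3;
  C1 1 5;
  C1 2 3;
  C1 1 5;
  C1 2 3;
  C1 1 5;
  C1 2 3;
  C1 1 5;
  C1 2 3;
  C1 1 5;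
  C1 2 3;
  C1 1 5;
  C1 2 3;
  C1 1 5;
  C1 2 3;
  C1 1 5;
  C1 2 3;
  C1 1 5;
  C1 0 1;
  C1 0 1;
  C1 0 1;
  C1 0 1;
  C1 0 1;
  C1 0 1;
  C1 0 1;
  C1 0 1;
  C1 0 1;
  C1 0 1;
  C1 0 1;
  C1 0 1;
  C1 0 1;
  C1 0 1;
  C1 0 1;
  C1 0 1;
  C1 0 1;
  C1 0 1;
  C1 0 1;
  C1 0 1;
  C1 0 1;
  C1 0 1;
  C1 0 1;
  C1 0 1;
  C1 0 1;
  C1 0 1;
  C1 0 1;
  C1 0 1;
  C1 0 1;
  C1 0 1;
  C1 0 1;
  C1 0 1;
  C1 0 1;
  C1 0 1;
  C1 0 1;
  C1 0 1;
  C1 0 1;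
  C1 0 1;
  C1 0 1;
  C1 0 1;
  C1 0 1;
  C1 0 1;
  C1 0 1;
  C1 0 1;
  C1 0 1;
  C1 0 1;
  C1 0 1;
  C1 0 1;
  C1 0 1;
  C1 0 1;
  C1 0 1;
  C1 0 1;
  C1 0 1;
  C1 0 1;
  C1 0 1;
  C1 0 1;
  C1 0 1;
  C1 0 1;
  C1 0 1;
  C1 0 1;
  C1 0 1;
  C1 0 1;
  C1 0 1;
  C1 0 1].


Arguments V7 : simpl never.
Definition mkset (l : seq nat) : {set 'I_7} := [set i : 'I_7 | val i \in l].
Definition o7 (k : nat) : 'I_7 := inord k.

Lemma o7K k : k < 7 -> val (o7 k) = k.
Proof. exact: inordK. Qed.

Lemma mk_card l : #|mkset l| <= size l.
Proof.
elim: l => [|a l IH]; first by rewrite (_ : mkset [::] = set0) ?cards0 //; apply/setP => i; rewrite !inE.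
have sub : mkset (a :: l) \subset o7 a |: mkset l.
  apply/subsetP => i; rewrite !inE => /orP [/eqP ia|->]; last by rewrite orbT.
  by rewrite -ia /o7 inord_val eqxx.
apply: leq_trans (subset_leq_card sub) _; rewrite cardsU1 /=.
have := leq_b1 (o7 a \notin mkset l); move: IH.
move: (#|mkset l|) (size l) (nat_of_bool (o7 a \notin mkset l)) => x y z; lia.
Qed.

Lemma in_V7 k : (k \in V7) = (k < 7).
Proof. by rewrite /V7 mem_iota. Qed.

Lemma mk_V7 : mkset V7 = setT.
Proof. by apply/setP => i; rewrite /mkset in_set in_setT in_V7 ltn_ord. Qed.

Lemma mk_Sw w : w < 7 -> mkset (Sw w) = setT :\ o7 w.
Proof.
move=> w7; apply/setP => i; rewrite /mkset in_set /Sw mem_filter in_V7 ltn_ord andbT !inE.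
by rewrite andbT -{1}(o7K w7) (inj_eq val_inj).
Qed.

Lemma mk_dom bs S l : all (fun x => x < 7) S -> all (fun x => x < 7) l ->
  dominating (Gb bs) (mkset S) (mkset l) = domn bs S l.
Proof.
move=> /allP S7 /allP l7; rewrite /dominating /domn; congr andb.
  apply/subsetP/allP => [H d dl|H i].
    by move: (H (o7 d)); rewrite !inE o7K ?l7 //; apply.
  by rewrite !inE => /H.
apply/forall_inP/allP => [H x xS|H i].
  have := H (o7 x); rewrite !inE o7K ?S7 // => /(_ xS) /orP [->//|/exists_inP [j]].
  rewrite inE => jl exj; apply/orP; right; apply/hasP; exists (val j) => //.
  by rewrite /Gb o7K ?S7 in exj.
rewrite !inE => /H /orP [->//|/hasP [j jl exj]]; apply/orP; right.
apply/exists_inP; exists (o7 j); first by rewrite inE o7K ?l7.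
by rewrite /Gb o7K ?l7.
Qed.

Lemma mk_neq l1 l2 : all (fun x => x < 7) l1 -> has (fun k => k \notin l2) l1 ->
  mkset l1 != mkset l2.
Proof.
move=> /allP l7 /hasP [k kl nk]; apply/negP => /eqP /setP /(_ (o7 k)).
by rewrite !inE o7K ?l7 // kl (negbTE nk).
Qed.

Lemma Gbn_sym bs : forall i j, Gbn bs i j = Gbn bs j i.
Proof. by move=> i j; rewrite /Gbn minnC maxnC. Qed.

Lemma Gbn_irr bs : forall i, Gbn bs i i = false.
Proof. by move=> i; rewrite /Gbn minnn maxnn; do 7? case: i => [//|i]. Qed.

Lemma Gb_sym bs : symmetric (Gb bs).
Proof. by move=> i j; rewrite /Gb Gbn_sym. Qed.

Lemma Gb_irr bs : irreflexive (Gb bs).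
Proof. by move=> i; rewrite /Gb Gbn_irr. Qed.

Section Certs.
Variables (T : finType) (e : rel T).
Hypotheses (e_sym : symmetric e) (e_irr : irreflexive e) (hyp : hypo_unique e)
  (g3 : gamma e setT = 3).

Lemma cert_isol (w : T) : (forall y, ~~ e w y) -> False.
Proof. by move=> H; have [y] := no_isolated e_sym hyp w; rewrite (negbTE (H y)). Qed.

Lemma cert_c1 (D : {set T}) : dominating e setT D -> #|D| <= 2 -> False.
Proof. by move=> /gamma_min; rewrite g3 => h1 h2; have := leq_trans h1 h2. Qed.

Lemma cert_c2 (w : T) (D1 D2 : {set T}) : D1 != D2 -> #|D1| <= 2 -> #|D2| <= 2 ->
  dominating e (setT :\ w) D1 -> dominating e (setT :\ w) D2 -> False.
Proof.
move=> n12 c1 c2 d1 d2.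
have ge : 2 <= gamma e (setT :\ w) by have := gamma_del e (in_setT w); rewrite g3.
have := gs_uniq hyp (dom_gs d1 (leq_trans c1 ge)) (dom_gs d2 (leq_trans c2 ge)).
by move/eqP; rewrite (negbTE n12).
Qed.

Lemma cert_c4 (w : T) (D1 D2 : {set T}) : D1 != D2 -> #|D1| <= 3 -> #|D2| <= 3 -> w \notin D1 -> w \notin D2 ->
  dominating e setT D1 -> dominating e setT D2 ->
  (forall D : {set T}, #|D| <= 2 -> ~~ dominating e (setT :\ w) D) -> False.
Proof.
move=> n12 c1 c2 w1 w2 d1 d2 H.
have c1' : #|D1| <= gamma e setT by rewrite g3.
have c2' : #|D2| <= gamma e setT by rewrite g3.
have lt := caseA_two hyp (dom_gs d1 c1') (dom_gs d2 c2') n12 w1 w2.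
have [D dD cD] := gamma_ex e (setT :\ w).
by move: (H D); rewrite cD -ltnS -g3 lt dD => /(_ isT).
Qed.

End Certs.

Lemma domn_lt bs S l : all (fun x => x < 7) S -> domn bs S l -> all (fun x => x < 7) l.
Proof.
move=> /allP S7 /andP [/allP lS _]; apply/allP => x xl; exact: S7 (lS x xl).
Qed.

Lemma V7_lt : all (fun x => x < 7) V7.
Proof. by []. Qed.

Lemma Sw_lt w : all (fun x => x < 7) (Sw w).
Proof. by apply/allP => x; rewrite /Sw mem_filter in_V7 => /andP []. Qed.

Lemma mk_in w l : w < 7 -> (o7 w \in mkset l) = (w \in l).
Proof. by move=> w7; rewrite /mkset in_set o7K. Qed.

Lemma mk_pair (a b : 'I_7) : mkset [:: val a; val b] = [set a; b].
Proof.
apply/setP => i; rewrite /mkset in_set !inE.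
by rewrite !(inj_eq val_inj).
Qed.

Lemma cardS7 w : #|setT :\ (w : 'I_7)| = 6.
Proof. by move: (cardsD1 w [set: 'I_7]); rewrite in_setT cardsT card_ord add1n => -[]. Qed.

Lemma small_sets (D : {set 'I_7}) : #|D| <= 2 -> D != set0 ->
  exists a b : 'I_7, D = [set a; b].
Proof.
move=> c2 n0; have : 0 < #|D| by rewrite lt0n cards_eq0.
case: (ltngtP #|D| 1) => [|h1 _|h1 _]; first by lia.
  have /cards2P [a [b [_ ->]]] : #|D| == 2 by lia.
  by exists a, b.
have /cards1P [a ->] : #|D| == 1 by rewrite h1.
by exists a, a; rewrite setUid.
Qed.

Lemma iV (i : 'I_7) : val i \in V7.
Proof. by rewrite in_V7 ltn_ord. Qed.

Lemma cyc_o7 a b : a < 7 -> b < 7 -> cycle_rel 7 (o7 a) (o7 b) = cyclen a b.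
Proof. by move=> a7 b7; rewrite /cycle_rel /cyclen !o7K. Qed.

Lemma check_sound bs c : check bs c -> hypo_unique (Gb bs) -> gamma (Gb bs) setT = 3 ->
  isomorphic (Gb bs) 7 (cycle_rel 7).
Proof.
have sy := Gb_sym bs; have ir := Gb_irr bs.
case: c => [p|w|a b|w a b c d|w a b c d f g].
- case/and3P => /allP p7 /allP Hg /allP Hi _ _.
  pose f (i : 'I_7) := o7 (nth 0 p i).
  exists f; split.
    apply: inj_card_bij => // i j /(congr1 val); rewrite /f !o7K ?p7 ?iV //.
    by move=> eq; apply/val_inj/eqP; move: (allP (Hi i (iV i)) j (iV j)); rewrite eq eqxx.
  move=> i j; rewrite /f cyc_o7 ?p7 ?iV //.
  by apply/eqP; exact: (allP (Hg i (iV i)) j (iV j)).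
- case/andP => w7 /allP H hyp g3; exfalso; apply: (cert_isol sy hyp (w := o7 w)) => y.
  by rewrite /Gb o7K //; apply: H; exact: iV.
- move=> H hyp g3; exfalso.
  have l7 := domn_lt V7_lt H.
  apply: (cert_c1 g3 (D := mkset [:: a; b])); first by rewrite -mk_V7 mk_dom.
  exact: mk_card.
- case/and5P => w7 _ _ hn /andP [H1 H2] hyp g3; exfalso.
  have l1 := domn_lt (Sw_lt w) H1; have l2 := domn_lt (Sw_lt w) H2.
  apply: (cert_c2 hyp g3 (w := o7 w) (D1 := mkset [:: a; b]) (D2 := mkset [:: c; d])).
  - exact: mk_neq.
  - exact: mk_card.
  - exact: mk_card.
  - by rewrite -mk_Sw // mk_dom // Sw_lt.
  - by rewrite -mk_Sw // mk_dom // Sw_lt.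
- case/and5P => w7 _ _ hn /and5P [w1 w2 H1 H2 /allP Hall] hyp g3; exfalso.
  have l1 := domn_lt V7_lt H1; have l2 := domn_lt V7_lt H2.
  apply: (cert_c4 hyp g3 (w := o7 w) (D1 := mkset [:: a; b; c]) (D2 := mkset [:: d; f; g])).
  - exact: mk_neq.
  - exact: mk_card.
  - exact: mk_card.
  - by rewrite mk_in.
  - by rewrite mk_in.
  - by rewrite -mk_V7 mk_dom.
  - by rewrite -mk_V7 mk_dom.
  move=> D cD; case: (eqVneq D set0) => [->|n0].
    apply/negP => /domP [_ /(_ (o7 (w.+1 %% 7)))].
    rewrite !inE -(inj_eq val_inj) !o7K ?ltn_pmod //.
    have -> : (w.+1 %% 7 == w) = false by clear -w7; move: w7; case: w => [|[|[|[|[|[|[|w]]]]]]].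
    by move=> /(_ isT) [|[y]]; rewrite ?inE.
  have [a' [b' ->]] := small_sets cD n0.
  rewrite -mk_pair -mk_Sw // mk_dom ?Sw_lt //; last by rewrite /= !ltn_ord.
  by apply: (allP (Hall _ (iV a'))); exact: iV.
Qed.

Arguments o7 : simpl never.

Lemma all_ok : all2 check (allbits 11) table.
Proof. by vm_compute. Qed.

Lemma allbits_mem n bs : size bs = n -> bs \in allbits n.
Proof.
elim: n bs => [|n IH] [|b bs] //= [sz].
have inj (c : bool) : injective (cons c) by move=> s1 s2 [].
by rewrite mem_cat; case: b; rewrite (mem_map (inj _)) ?IH ?orbT.
Qed.

Lemma all2_ex (l : seq (seq bool)) (t : seq cert) x : all2 check l t -> x \in l ->
  exists c, check x c.
Proof.
elim: l t => [|y l IH] [|c t] //= /andP [hc ht]; rewrite inE => /orP [/eqP->|xl].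
  by exists c.
exact: IH ht xl.
Qed.

Definition bits (r : rel 'I_7) : seq bool :=
  [:: r (o7 0) (o7 3); r (o7 0) (o7 4); r (o7 0) (o7 5); r (o7 0) (o7 6);
      r (o7 1) (o7 2); r (o7 3) (o7 4); r (o7 3) (o7 5); r (o7 3) (o7 6);
      r (o7 4) (o7 5); r (o7 4) (o7 6); r (o7 5) (o7 6)].

Lemma rel_bits (r : rel 'I_7) : symmetric r -> irreflexive r ->
  r (o7 1) (o7 3) -> r (o7 1) (o7 4) -> r (o7 2) (o7 5) -> r (o7 2) (o7 6) ->
  ~~ r (o7 1) (o7 5) -> ~~ r (o7 1) (o7 6) -> ~~ r (o7 2) (o7 3) -> ~~ r (o7 2) (o7 4) ->
  ~~ r (o7 0) (o7 1) -> ~~ r (o7 0) (o7 2) ->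
  forall i j, r i j = Gb (bits r) i j.
Proof.
move=> sy ir k13 k14 k25 k26 k15 k16 k23 k24 k01 k02.
move: k15 k16 k23 k24 k01 k02 => /negbTE k15 /negbTE k16 /negbTE k23 /negbTE k24 /negbTE k01 /negbTE k02.
have H : forall a b, a < 7 -> b < 7 -> r (o7 a) (o7 b) = Gbn (bits r) a b.
  move=> a b ha hb.
  case: a ha => [|[|[|[|[|[|[|a]]]]]]] ha //; case: b hb => [|[|[|[|[|[|[|b]]]]]]] hb //;
  rewrite /Gbn /=;
  first [ by rewrite ir | by [] | by rewrite sy
        | by rewrite ?k13 ?k14 ?k25 ?k26 ?k15 ?k16 ?k23 ?k24 ?k01 ?k02
        | by rewrite sy ?k13 ?k14 ?k25 ?k26 ?k15 ?k16 ?k23 ?k24 ?k01 ?k02 ].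
move=> i j; rewrite /Gb -H ?ltn_ord //.
by rewrite /o7 !inord_val.
Qed.

Section C7main.
Variables (T : finType) (e : rel T).
Hypotheses (e_sym : symmetric e) (e_irr : irreflexive e) (hyp : hypo_unique e).

Lemma c7_main : #|T| = 7 -> gamma e setT = 3 -> isomorphic e 7 (cycle_rel 7).
Proof.
move=> n7 g3.
have [v lt] := exA e_sym e_irr hyp (ltac:(by rewrite n7)).
have [D gD uD] := gsw_ex hyp v.
have [eqg vD nbr _] := caseA_struct lt gD.
have /cards2P [x [y [xy Dxy]]] : #|D| == 2 by rewrite (gs_card gD); move: eqg; rewrite g3 => -[->].
have xD : x \in D by rewrite Dxy !inE eqxx.
have yD : y \in D by rewrite Dxy !inE eqxx orbT.
have hp (z : T) : z \in D -> 1 < #|[set p | priv e (setT :\ v) D z p]|.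
  move=> zD; have [u ezu] := no_isolated e_sym hyp z.
  apply: (pnl e_sym e_irr gD uD zD _ ezu); rewrite !inE andbT.
  by apply: contraTneq ezu => ->; rewrite e_sym; apply: nbr.
have /card_gt1P [a1 [a2 [ha1 ha2 a12]]] := hp x xD.
have /card_gt1P [b1 [b2 [hb1 hb2 b12]]] := hp y yD.
rewrite !inE in ha1 ha2 hb1 hb2.
have pr (z p : T) : priv e (setT :\ v) D z p -> [/\ p != v, p != x, p != y & e z p].
  case/and4P; rewrite !inE Dxy !inE negb_or => /andP [pv _] /andP [px py] ezp _.
  by split.
have [a1v a1x a1y xa1] := pr _ _ ha1.
have [a2v a2x a2y xa2] := pr _ _ ha2.
have [b1v b1x b1y yb1] := pr _ _ hb1.
have [b2v b2x b2y yb2] := pr _ _ hb2.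
have nab (p q : T) : priv e (setT :\ v) D x p -> priv e (setT :\ v) D y q -> p != q.
  move=> hp' hq; apply/negP => /eqP pq; rewrite -pq in hq.
  by move: xy; rewrite (priv_uniq hp' hq yD) eqxx.
have nyp (p : T) : priv e (setT :\ v) D x p -> ~~ e y p.
  case/and4P => _ _ _ /forall_inP H; apply/negP => eyp.
  by move: (H y yD); rewrite eyp eq_sym (negbTE xy).
have nxp (p : T) : priv e (setT :\ v) D y p -> ~~ e x p.
  case/and4P => _ _ _ /forall_inP H; apply/negP => exp.
  by move: (H x xD); rewrite exp (negbTE xy).
have vx : v != x by apply: contraNneq vD => ->.
have vy : v != y by apply: contraNneq vD => ->.
pose s := [:: v; x; y; a1; a2; b1; b2].
have us : uniq s.
  rewrite /s /= !inE !negb_or vx vy xy !(eq_sym v) a1v a2v b1v b2v.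
  rewrite !(eq_sym x) a1x a2x b1x b2x !(eq_sym y) a1y a2y b1y b2y.
  by rewrite a12 b12 (nab _ _ ha1 hb1) (nab _ _ ha1 hb2) (nab _ _ ha2 hb1) (nab _ _ ha2 hb2).
pose g (i : 'I_7) := nth v s i.
have ginj : injective g.
  by move=> i j /eqP; rewrite /g nth_uniq // => /eqP /val_inj.
case: (inj_card_bij ginj (ltac:(by rewrite n7 card_ord))) => f gK fK.
pose e' (i j : 'I_7) := e (g i) (g j).
have hf : forall a b, e a b = e' (f a) (f b) by move=> a b; rewrite /e' !fK.
have hyp' := hypo_iso fK gK hf hyp.
have g3' : gamma e' setT = 3 by rewrite -(gammaT_iso fK gK hf).
have ge' (a b : nat) : a < 7 -> b < 7 -> e' (o7 a) (o7 b) = e (nth v s a) (nth v s b).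
  by move=> a7 b7; rewrite /e' /g !o7K.
have sy' : symmetric e' by move=> i j; rewrite /e' e_sym.
have ir' : irreflexive e' by move=> i; rewrite /e' e_irr.
have eqG := rel_bits sy' ir'
  (ltac:(by rewrite ge')) (ltac:(by rewrite ge')) (ltac:(by rewrite ge')) (ltac:(by rewrite ge'))
  (ltac:(by rewrite ge' //= nxp)) (ltac:(by rewrite ge' //= nxp)) (ltac:(by rewrite ge' //= nyp))
  (ltac:(by rewrite ge' //= nyp)) (ltac:(by rewrite ge' //= nbr)) (ltac:(by rewrite ge' //= nbr)).
set bs := bits e' in eqG.
have hypb : hypo_unique (Gb bs).
  by apply: (hypo_iso (f := id) (g := id)) hyp' => // a b; rewrite eqG.
have g3b : gamma (Gb bs) setT = 3.
  by rewrite -(gammaT_iso (f := id) (g := id) (e := e')) // => a b; rewrite eqG.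
have [c hc] := all2_ex all_ok (allbits_mem (erefl : size bs = 11)).
have iso := check_sound hc hypb g3b.
apply: (iso_trans (h := f)) iso; first by exists g.
by move=> a b; rewrite hf eqG.
Qed.

End C7main.

Arguments o7 : simpl never.

Lemma mk_domR (Rn : nat -> nat -> bool) S l : all (fun x => x < 7) S -> all (fun x => x < 7) l ->
  dominating (fun i j : 'I_7 => Rn i j) (mkset S) (mkset l) =
  all (fun d => d \in S) l && all (fun x => (x \in l) || has (Rn x) l) S.
Proof.
move=> /allP S7 /allP l7; rewrite /dominating; congr andb.
  apply/subsetP/allP => [H d dl|H i].
    by move: (H (o7 d)); rewrite !inE o7K ?l7 //; apply.
  by rewrite !inE => /H.
apply/forall_inP/allP => [H x xS|H i].
  have := H (o7 x); rewrite !inE o7K ?S7 // => /(_ xS) /orP [->//|/exists_inP [j]].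
  rewrite inE => jl exj; apply/orP; right; apply/hasP; exists (val j) => //.
  by rewrite o7K ?S7 in exj.
rewrite !inE => /H /orP [->//|/hasP [j jl exj]]; apply/orP; right.
apply/exists_inP; exists (o7 j); first by rewrite inE o7K ?l7.
by rewrite o7K ?l7.
Qed.

Lemma cyc_eq : cycle_rel 7 = (fun i j : 'I_7 => cyclen i j).
Proof. by []. Qed.

Lemma gammaC7 : gamma (cycle_rel 7) setT = 3.
Proof.
apply/eqP; rewrite eqn_leq; apply/andP; split.
  apply: (leq_trans (gamma_min (D := mkset [:: 0; 3; 5]) _)); last exact: mk_card.
  by rewrite -mk_V7 cyc_eq mk_domR.
rewrite leqNgt; apply/negP => lt.
have [D dD cD] := gamma_ex (cycle_rel 7) setT.
have n0 : D != set0.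
  apply/negP => /eqP D0; move: dD; rewrite D0 => /domP [_ /(_ (o7 0) (in_setT _))].
  by case=> [|[y]]; rewrite inE.
have cD2 : #|D| <= 2 by rewrite cD -ltnS.
have [a [b Dab]] := small_sets cD2 n0.
move: dD; rewrite Dab -mk_pair -mk_V7 cyc_eq mk_domR //; last by rewrite /= !ltn_ord.
have : all (fun a => all (fun b =>
   ~~ (all (fun d => d \in V7) [:: a; b] &&
       all (fun x => (x \in [:: a; b]) || has (cyclen x) [:: a; b]) V7)) V7) V7.
  by vm_compute.
move/allP/(_ _ (iV a))/allP/(_ _ (iV b)).
by move/negbTE ->.
Qed.

Definition pn4 (k : nat) := nth 0 [:: 0; 2; 1; 3] k.
Definition p4 (i : 'I_4) : 'I_4 := inord (pn4 i).

Lemma p4K (i : 'I_4) : nat_of_ord (p4 i) = pn4 i.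
Proof. by rewrite /p4 inordK //; case: i => [[|[|[|[|]]]] ?]. Qed.

Lemma cock_cyc4 (T : finType) (e : rel T) :
  isomorphic e 4 (cocktail_rel 4) -> isomorphic e 4 (cycle_rel 4).
Proof.
case=> f [bf hf]; exists (p4 \o f); split.
  apply: bij_comp => //; apply: inj_card_bij => // i j /(congr1 (@nat_of_ord 4)); rewrite !p4K.
  by case: i => [[|[|[|[|]]]] ?] //; case: j => [[|[|[|[|]]]] ?] // _; apply/val_inj.
move=> x y; rewrite hf /=; move: (f x) (f y) => i j.
rewrite /cycle_rel !p4K /cocktail_rel.
by case: i => [[|[|[|[|]]]] ?] //; case: j => [[|[|[|[|]]]] ?].
Qed.

Lemma iso_card (T : finType) (e : rel T) m (r : rel 'I_m) : isomorphic e m r -> #|T| = m.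
Proof. by case=> f [bf _]; rewrite (bij_eq_card bf) card_ord. Qed.

Theorem proposition3p5 (T : finType) (e : rel T)
  (e_sym : symmetric e) (e_irr : irreflexive e) :
  hypo_unique e ->
  let n := #|T| in
  [/\ 1 <= gamma e setT <= (2 * n) %/ 5 + 1,
      gamma e setT = 1 <-> isomorphic e 2 (complete_rel 2),
      gamma e setT = 2 <->
        (4 <= n /\ ~~ odd n /\ isomorphic e n (cocktail_rel n)) &
      gamma e setT = (2 * n) %/ 5 + 1 <->
        (isomorphic e 2 (complete_rel 2) \/ isomorphic e 4 (cycle_rel 4) \/
         isomorphic e 7 (cycle_rel 7))].
Proof.
move=> hyp n; rewrite {}/n.
have gpos := gamma_pos hyp.
have n2 := card_ge2 e_sym e_irr hyp.
have g1 : gamma e setT = 1 <-> isomorphic e 2 (complete_rel 2).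
  split=> [h|iso]; first by exact: (n2_K2 e_sym e_irr hyp (gamma1_n2 e_sym e_irr hyp h)).2.
  exact: (n2_K2 e_sym e_irr hyp (iso_card iso)).1.
have g2 : gamma e setT = 2 <->
        (4 <= #|T| /\ ~~ odd #|T| /\ isomorphic e #|T| (cocktail_rel #|T|)).
  split=> [h|[n4 [ev [f [bf hf]]]]].
    by have [? ? ?] := cocktail_main e_sym e_irr hyp h.
  case: bf => g fK gK.
  have le2 : gamma e setT <= 2.
    have o0 : 0 < #|T| by lia.
    have o1 : 1 < #|T| by lia.
    pose i0 : 'I_#|T| := Ordinal o0; pose i1 : 'I_#|T| := Ordinal o1.
    apply: (leq_trans (gamma_min (D := [set g i0; g i1]) _)); last first.
      by rewrite cards2; case: (_ != _).
    apply/domP; split; first exact: subsetT.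
    move=> t _; case: (eqVneq (f t) i0) => [ft|ft].
      by left; rewrite !inE -ft fK eqxx.
    case: (eqVneq (f t) i1) => [ft1|ft1].
      by left; rewrite !inE -ft1 fK eqxx orbT.
    right; exists (g i0); first by rewrite !inE eqxx.
    rewrite hf gK /cocktail_rel ft /=.
    have : 1 < f t.
      move: ft ft1; rewrite -!(inj_eq val_inj) /=; lia.
    move=> h; apply/negP => /eqP h2; move: h; rewrite -[val (f t)]odd_double_half h2 /=.
    by case: (odd _).
  apply/eqP; rewrite eqn_leq le2 /=; rewrite ltn_neqAle gpos andbT.
  apply/negP => /eqP h; move: (gamma1_n2 e_sym e_irr hyp (esym h)); lia.
split=> //.
- exact: bound_all.
- split=> [h|].
    case: (ltnP 2 #|T|) => [n3|le2]; last first.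
      left; apply/g1; have n2' : #|T| = 2 by lia.
      by move: h; rewrite n2'.
    have mb := main_bound e_sym e_irr hyp n3.
    have := divn_eq (2 * #|T|) 5; have := ltn_pmod (2 * #|T|) (isT : 0 < 5).
    move: h; rewrite -/(gamma e setT).
    move: ((2 * #|T|) %/ 5) ((2 * #|T|) %% 5) => q r h rl dq.
    have [n4|n7] : #|T| = 4 \/ #|T| = 7 by move: mb n3 dq rl; rewrite h addn1 /= -subn1; move: #|T| => N; clear; lia.
      right; left; apply: cock_cyc4.
      have h2 : gamma e setT = 2 by rewrite h; move: dq rl; rewrite n4; lia.
      have [_ [_ iso]] := proj1 g2 h2; by move: iso; rewrite n4.
    right; right; apply: c7_main => //.
    by rewrite h; move: dq rl; rewrite n7; lia.
  case=> [iso|[iso|iso]].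
  + by rewrite (proj2 g1 iso) (iso_card iso).
  + have n4 := iso_card iso; case: iso => f [[g fK gK] hf].
    have le2 : gamma e setT <= 2.
      apply: (leq_trans (gamma_min (D := [set g ord0; g (inord 2)]) _)); last first.
        by rewrite cards2; case: (_ != _).
      apply/domP; split; first exact: subsetT.
      move=> t _; rewrite -(fK t); move: (f t) => i.
      case: i => [[|[|[|[|]]]] Hi] //.
      * by left; rewrite !inE (_ : Ordinal Hi = ord0) ?eqxx //; apply/val_inj.
      * by right; exists (g ord0); rewrite ?inE ?eqxx // hf !gK.
      * left; rewrite !inE (_ : Ordinal Hi = inord 2) ?eqxx ?orbT //.
        by apply/val_inj; rewrite /= inordK.
      * by right; exists (g ord0); rewrite ?inE ?eqxx // hf !gK.
    have hg2 : gamma e setT = 2.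
      apply/eqP; rewrite eqn_leq le2 /= ltn_neqAle gpos andbT.
      apply/negP => /eqP h; move: (gamma1_n2 e_sym e_irr hyp (esym h)); lia.
    by rewrite hg2 n4.
  + have n7 := iso_card iso; case: iso => f [[g fK gK] hf].
    by rewrite (gammaT_iso fK gK hf) gammaC7 n7.
Qed.
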